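(* Let $G$ be a locally finite connected graph and $\overline{T}$ a spanning topological caterpillar of $G$. Let $v,w\in V(G)$ with $V_v\le_T V_w$. Then for any two vertices $x,y$ with $V_v<_T V_x<_T V_w$ and $V_v<_T V_y<_T V_w$ there exists a finite $x$–$y$ path in the induced subgraph $G[I_{vw}]$, where $I_{vw}=\bigcup\{V_u : V_v\le_T V_u\le_T V_w\}$.
   Context: All graphs are simple. For a locally finite connected graph $G$, $|G|$ is the Freudenthal compactification (the 1-complex $G$ plus its ends, i.e. classes of rays not separable by finitely many vertices, with the standard topology). An arc is a homeomorphic image of $[0,1]$ in $|G|$, a circle one of $S^1$; $\overline{F}$ is the closure in $|G|$ of a subgraph $F$. A topological caterpillar is a circle-free arc-connected closure $\overline{T}$ of a forest $T\subseteq G$ such that $\overline{T-L}$ is an arc $A$, where $L$ is the set of vertices of degree $1$ in $T$; it is spanning if $V(T)=V(G)$. The arc $A$ induces a linear order $<_A$ on $V(T)\setminus L$. For $<_A$-consecutive $v'<_A w'$ in $V(T)\setminus L$ put $P_{w'}=\{w'\}\cup(N_T(v')\cap L)$; if $<_A$ has a maximum $m$ put $P^+=N_T(m)\cap L$; if it has a minimum $s$ put $P^-=\{s\}$. These sets form a partition $\mathcal{P}_T$ of $V(T)$, and $V_u$ denotes the class containing $u$. The linear order $<_T$ on $\mathcal{P}_T$ is given by $V_{v'}<_T V_{w'}$ whenever $v',w'\in V(T)\setminus L$ with $v'<_A w'$, together with $P^-<_T P<_T P^+$ for all other classes $P$. *)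

(* Defs.v *)
From Stdlib Require Import Reals List.
Import ListNotations.
Open Scope R_scope.

Set Implicit Arguments.
Unset Strict Implicit.

Section Graphs.
Variable V : Type.
Variable adj : V -> V -> Prop.

Definition simple_graph : Prop :=
  (forall u v, adj u v -> adj v u) /\ (forall v, ~ adj v v).

Definition locally_finite : Prop :=
  forall v, exists l : list V, forall w, adj v w -> In w l.

Fixpoint walk (E : V -> V -> Prop) (x : V) (l : list V) : Prop :=
  match l with
  | [] => True
  | y :: l' => E x y /\ walk E y l'
  end.

Definition graph_connected : Prop :=
  forall x y, exists l, walk adj x l /\ last l x = y.

Definition conn_avoid (S : list V) (a b : V) : Prop :=
  ~ In a S /\ exists l, walk adj a l /\ last l a = b /\
                        forall z, In z l -> ~ In z S.

Definition is_ray (r : nat -> V) : Prop :=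
  (forall n m, r n = r m -> n = m) /\ (forall n, adj (r n) (r (S n))).

Definition equiv_rays (r r' : nat -> V) : Prop :=
  forall Sf : list V, exists N, forall n m, (N <= n)%nat -> (N <= m)%nat ->
    conn_avoid Sf (r n) (r' m).

Definition is_end (E : (nat -> V) -> Prop) : Prop :=
  exists r, is_ray r /\ forall r', E r' <-> (is_ray r' /\ equiv_rays r r').

(** A point of the 1-complex G is given by its barycentric weight function
    f : V -> R (a vertex v is the indicator of v; an inner point of the edge uv
    has weights 1-t at u and t at v, 0<t<1). *)
Inductive point : Type :=
  | Cpx : (V -> R) -> point
  | Endp : ((nat -> V) -> Prop) -> point.

Definition is_vertex_fun (f : V -> R) (v : V) : Prop :=
  f v = 1 /\ forall w, w <> v -> f w = 0.

Definition inner_of (f : V -> R) (u v : V) : Prop :=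
  adj u v /\ 0 < f u < 1 /\ f v = 1 - f u /\
  forall w, w <> u -> w <> v -> f w = 0.

Definition is_cpx (f : V -> R) : Prop :=
  (exists v, is_vertex_fun f v) \/ (exists u v, inner_of f u v).

Definition valid (p : point) : Prop :=
  match p with
  | Cpx f => is_cpx f
  | Endp E => is_end E
  end.

Definition vtx_at (p : point) (v : V) : Prop :=
  exists f, p = Cpx f /\ is_vertex_fun f v.

(** v lies in C(S, E): the component of G - S containing a tail of
    (every) ray of the end E *)
Definition inC (Sf : list V) (E : (nat -> V) -> Prop) (v : V) : Prop :=
  exists r, E r /\ exists N, forall n, (N <= n)%nat -> conn_avoid Sf v (r n).

(** p lies in \hat C(S, E) = C(S,E) u Omega(S,E) u (inner points of S-C edges) *)
Definition inChat (Sf : list V) (E : (nat -> V) -> Prop) (p : point) : Prop :=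
  match p with
  | Cpx f => exists v, f v <> 0 /\ inC Sf E v
  | Endp E' => exists r', E' r' /\ exists N, forall n, (N <= n)%nat ->
                 inC Sf E (r' n)
  end.

(** Basic neighbourhoods of a point of |G| (a neighbourhood base of the
    standard topology, G locally finite): small balls (edges of length 1)
    around points of the 1-complex, and the sets \hat C(S, w) around ends. *)
Definition basic_nbhd (p : point) (N : point -> Prop) : Prop :=
  match p with
  | Cpx f => exists eps, 0 < eps /\
      forall q, N q <-> (valid q /\ exists g, q = Cpx g /\
                                    forall w, Rabs (g w - f w) < eps)
  | Endp E => exists Sf : list V, forall q, N q <-> (valid q /\ inChat Sf E q)
  end.

Definition homeo_onto (X : Type) (D : X -> Prop) (d : X -> X -> R)
  (alpha : X -> point) (A : point -> Prop) : Prop :=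
  (forall x, D x -> valid (alpha x)) /\
  (forall p, A p <-> exists x, D x /\ alpha x = p) /\
  (forall x y, D x -> D y -> alpha x = alpha y -> x = y) /\
  (forall x, D x -> forall N, basic_nbhd (alpha x) N ->
     exists delta, 0 < delta /\ forall y, D y -> d x y < delta -> N (alpha y)) /\
  (forall x, D x -> forall eps, 0 < eps ->
     exists N, basic_nbhd (alpha x) N /\
       forall y, D y -> N (alpha y) -> d x y < eps).

Definition unit_interval (t : R) : Prop := 0 <= t <= 1.

Definition arc_param (alpha : R -> point) (A : point -> Prop) : Prop :=
  homeo_onto unit_interval (fun s t => Rabs (s - t)) alpha A.

Definition is_arc (A : point -> Prop) : Prop := exists alpha, arc_param alpha A.

Definition unit_circle (z : R * R) : Prop := fst z ^ 2 + snd z ^ 2 = 1.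

Definition is_circle (C : point -> Prop) : Prop :=
  exists alpha : R * R -> point,
    homeo_onto unit_circle
      (fun z z' => sqrt ((fst z - fst z') ^ 2 + (snd z - snd z') ^ 2)) alpha C.

Definition in_sub (HV : V -> Prop) (HE : V -> V -> Prop) (p : point) : Prop :=
  (exists v, HV v /\ vtx_at p v) \/
  (exists f u v, p = Cpx f /\ HE u v /\ inner_of f u v).

Definition closure (P : point -> Prop) (p : point) : Prop :=
  valid p /\ forall N, basic_nbhd p N -> exists q, N q /\ P q.

Definition arc_connected (X : point -> Prop) : Prop :=
  forall p q, X p -> X q -> p <> q ->
    exists alpha A, arc_param alpha A /\ alpha 0 = p /\ alpha 1 = q /\
                    forall z, A z -> X z.

Definition circle_free (X : point -> Prop) : Prop :=
  forall C, is_circle C -> ~ (forall z, C z -> X z).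

Definition subgraph (tV : V -> Prop) (tE : V -> V -> Prop) : Prop :=
  (forall u v, tE u v -> tE v u) /\ (forall u v, tE u v -> adj u v) /\
  (forall u v, tE u v -> tV u).

Definition acyclic (tE : V -> V -> Prop) : Prop :=
  forall x l, walk tE x l -> last l x = x -> (3 <= length l)%nat -> NoDup l -> False.

Definition forest (tV : V -> Prop) (tE : V -> V -> Prop) : Prop :=
  subgraph tV tE /\ acyclic tE.

Definition leaf (tV : V -> Prop) (tE : V -> V -> Prop) (v : V) : Prop :=
  tV v /\ exists u, tE v u /\ forall w, tE v w -> w = u.

Definition TmL_V (tV : V -> Prop) (tE : V -> V -> Prop) (v : V) : Prop :=
  tV v /\ ~ leaf tV tE v.
Definition TmL_E (tV : V -> Prop) (tE : V -> V -> Prop) (u v : V) : Prop :=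
  tE u v /\ ~ leaf tV tE u /\ ~ leaf tV tE v.

Definition top_caterpillar (tV : V -> Prop) (tE : V -> V -> Prop) : Prop :=
  forest tV tE /\
  circle_free (closure (in_sub tV tE)) /\
  arc_connected (closure (in_sub tV tE)) /\
  is_arc (closure (in_sub (TmL_V tV tE) (TmL_E tV tE))).

Definition spanning_top_caterpillar (tV : V -> Prop) (tE : V -> V -> Prop) : Prop :=
  top_caterpillar tV tE /\ forall v, tV v.

(** * The order <_A and the partition P_T.
    alpha is a (fixed, arbitrary) parametrisation of the arc A = closure(T-L);
    it fixes the orientation of A. *)
Definition posA (alpha : R -> point) (v : V) (t : R) : Prop :=
  unit_interval t /\ vtx_at (alpha t) v.

Definition ltA (alpha : R -> point) (v w : V) : Prop :=
  exists s t, posA alpha v s /\ posA alpha w t /\ s < t.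

Definition consecA tV tE alpha (v' w' : V) : Prop :=
  TmL_V tV tE v' /\ TmL_V tV tE w' /\ ltA alpha v' w' /\
  ~ (exists u, TmL_V tV tE u /\ ltA alpha v' u /\ ltA alpha u w').

Definition is_minA tV tE alpha (s : V) : Prop :=
  TmL_V tV tE s /\ forall u, TmL_V tV tE u -> u <> s -> ltA alpha s u.
Definition is_maxA tV tE alpha (m : V) : Prop :=
  TmL_V tV tE m /\ forall u, TmL_V tV tE u -> u <> m -> ltA alpha u m.

(** Classes of P_T are indexed by keys: [Some w'] stands for P_{w'}
    (w' having a <_A-predecessor) or for P^- = {s} (w' = s the minimum);
    [None] stands for P^+. [cls u k]: u belongs to the class with key k. *)
Definition cls tV tE alpha (u : V) (k : option V) : Prop :=
  match k with
  | Some w' => (exists v', consecA tV tE alpha v' w' /\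
                  (u = w' \/ (leaf tV tE u /\ tE v' u)))
               \/ (is_minA tV tE alpha w' /\ u = w')
  | None => exists m, is_maxA tV tE alpha m /\ leaf tV tE u /\ tE m u
  end.

Definition key_lt alpha (k k' : option V) : Prop :=
  match k, k' with
  | Some a, Some b => ltA alpha a b
  | Some _, None => True
  | None, _ => False
  end.

Definition key_le alpha (k k' : option V) : Prop := k = k' \/ key_lt alpha k k'.

End Graphs.

(* Main.v *)
Require Import Defs.
From Stdlib Require Import Reals List.
Import ListNotations.
Open Scope R_scope.
From Stdlib Require Import Lra Lia Classical ClassicalEpsilon FunctionalExtensionality PropExtensionality.
Set Implicit Arguments.
Unset Strict Implicit.

Lemma RI (P : R -> Prop) a b : a <= b -> P a ->
  (forall t, a <= t <= b -> (forall s, a <= s < t -> P s) ->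
     exists d, 0 < d /\ forall s, t <= s < t + d -> s <= b -> P s) ->
  forall s, a <= s <= b -> P s.
Proof.
  intros Hab Pa Hstep.
  set (E := fun x => a <= x <= b /\ forall s, a <= s <= x -> P s).
  assert (HB : bound E) by (exists b; intros x [Hx _]; lra).
  assert (HE : exists x, E x).
  { exists a; split; [lra|]. intros s Hs. replace s with a by lra. exact Pa. }
  destruct (completeness E HB HE) as [m [Hub Hlub]].
  assert (Ham : a <= m) by (apply Hub; destruct HE as [x Hx]; unfold E; split; [lra|]; intros s Hs; replace s with a by lra; exact Pa).
  assert (Hmb : m <= b) by (apply Hlub; intros x [Hx _]; lra).
  assert (Hbelow : forall s, a <= s < m -> P s).
  { intros s Hs. destruct (classic (P s)) as [|Hn]; [assumption|].
    exfalso. assert (m <= s); [|lra]. apply Hlub. intros x [Hx Hx2].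
    destruct (Rle_dec x s) as [|Hxs]; [assumption|]. exfalso. apply Hn, Hx2. lra. }
  destruct (Hstep m (conj Ham Hmb) Hbelow) as [d [Hd Hd2]].
  assert (Hall : forall s, a <= s <= Rmin b (m + d/2) -> P s).
  { intros s Hs. destruct (Rlt_dec s m). apply Hbelow; lra.
    pose proof (Rmin_r b (m+d/2)). pose proof (Rmin_l b (m+d/2)).
    apply Hd2; lra. }
  assert (Hmin : Rmin b (m + d/2) <= m).
  { apply Hub. split; [|exact Hall]. split.
    apply Rmin_glb; lra. apply Rmin_l. }
  assert (Hbm : b <= m).
  { unfold Rmin in Hmin. destruct (Rle_dec b (m + d/2)); lra. }
  intros s Hs. apply Hall. split; [lra|]. apply Rmin_glb; lra.
Qed.

Lemma RI_left (P : R -> Prop) a b : a <= b -> P b ->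
  (forall t, a <= t <= b -> (forall s, t < s <= b -> P s) ->
     exists d, 0 < d /\ forall s, t - d < s <= t -> a <= s -> P s) ->
  forall s, a <= s <= b -> P s.
Proof.
  intros Hab Pb Hstep s Hs.
  replace s with (- (- s)) by lra.
  apply (@RI (fun x => P (- x)) (-b) (-a)); try lra.
  - replace (- - b) with b by lra; exact Pb.
  - intros t Ht Hbel. destruct (Hstep (-t)) as [d [Hd Hd2]]; [lra| |].
    + intros s' Hs'. replace s' with (- - s') by lra. apply Hbel. lra.
    + exists d; split; [lra|]. intros s' Hs1 Hs2. apply Hd2; lra.
Qed.

Definition cont_on (f : R -> R) a b := forall t, a <= t <= b -> forall eps, 0 < eps ->
  exists d, 0 < d /\ forall s, a <= s <= b -> Rabs (t - s) < d -> Rabs (f s - f t) < eps.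

Lemma IVT_up f a b y : a <= b -> cont_on f a b -> f a < y -> y < f b ->
  exists c, a <= c <= b /\ f c = y.
Proof.
  intros Hab Hc Ha Hb. apply NNPP; intro Hn.
  assert (Hall : forall s, a <= s <= b -> f s < y).
  { apply RI; auto. intros t Ht Hbel.
    assert (Hft : f t < y).
    { destruct (Rlt_dec (f t) y) as [|Hge]; [assumption|].
      destruct (Req_dec (f t) y) as [Heq|Hne]. exfalso; apply Hn; exists t; auto.
      assert (Hgt : f t > y) by lra.
      destruct (Req_dec t a) as [->|Hta]. lra.
      destruct (Hc t Ht (f t - y)) as [d [Hd Hd2]]; [lra|].
      assert (H : a <= Rmax a (t - d/2)) by apply Rmax_l.
      assert (H0 : Rmax a (t - d/2) < t) by (apply Rmax_lub_lt; lra).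
      assert (H1 : t - d/2 <= Rmax a (t - d/2)) by apply Rmax_r.
      revert H H0 H1. generalize (Rmax a (t - d/2)). intros s H H0 H1.
      specialize (Hbel s (conj H H0)).
      specialize (Hd2 s ltac:(lra)).
      rewrite Rabs_right in Hd2 by lra.
      pose proof (Rle_abs (f s - f t)). assert (Hx: Rabs (f s - f t) < f t - y) by (apply Hd2; lra).
      rewrite Rabs_left1 in Hx by lra. lra. }
    destruct (Hc t Ht (y - f t)) as [d [Hd Hd2]]; [lra|].
    exists d; split; auto. intros s Hs Hsb.
    assert (Hx: Rabs (f s - f t) < y - f t).
    { apply Hd2. lra. rewrite Rabs_left1 by lra. lra. }
    pose proof (Rle_abs (f s - f t)). lra. }
  specialize (Hall b ltac:(lra)). lra.
Qed.

Lemma IVT_down f a b y : a <= b -> cont_on f a b -> f a > y -> y > f b ->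
  exists c, a <= c <= b /\ f c = y.
Proof.
  intros Hab Hc Ha Hb.
  destruct (@IVT_up (fun x => - f x) a b (-y)) as [c [Hc1 Hc2]]; try lra.
  - intros t Ht eps He. destruct (Hc t Ht eps He) as [d [Hd Hd2]]. exists d; split; auto.
    intros s Hs Hts. specialize (Hd2 s Hs Hts). replace (- f s - - f t) with (- (f s - f t)) by ring.
    rewrite Rabs_Ropp; auto.
  - exists c; split; auto; lra.
Qed.

Section G.
Variable V : Type.
Variable adj : V -> V -> Prop.
Hypothesis Hsym : forall u v, adj u v -> adj v u.
Hypothesis Hirr : forall v, ~ adj v v.
Implicit Types (f g : V -> R) (u v w z a b c y : V).

Lemma adj_neq u v : adj u v -> u <> v.
Proof. intros H ->. exact (Hirr H). Qed.

Lemma inner_sym f u v : inner_of adj f u v -> inner_of adj f v u.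
Proof.
  intros [H1 [H2 [H3 H4]]]. split; [auto|]. split; [lra|]. split; [lra|].
  intros w Hw1 Hw2. auto.
Qed.

Lemma vf_supp f v z : is_vertex_fun f v -> f z <> 0 -> z = v.
Proof. intros [H1 H2] Hz. destruct (classic (z = v)) as [|Hn]; auto. exfalso; apply Hz, H2, Hn. Qed.

Lemma inner_supp f u v z : inner_of adj f u v -> f z <> 0 -> z = u \/ z = v.
Proof.
  intros [H1 [H2 [H3 H4]]] Hz. destruct (classic (z = u)); auto. destruct (classic (z = v)); auto.
  exfalso; apply Hz; auto.
Qed.

Lemma inner_pos f u v : inner_of adj f u v -> 0 < f u /\ 0 < f v.
Proof. intros [H1 [H2 [H3 H4]]]. lra. Qed.

Lemma cpx_supp2 g a b z : is_cpx adj g -> g a <> 0 -> g b <> 0 -> a <> b -> g z <> 0 -> z = a \/ z = b.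
Proof.
  intros [[v Hv]|[u [v Huv]]] Ha Hb Hab Hz.
  - exfalso. apply Hab. rewrite (vf_supp Hv Ha), (vf_supp Hv Hb). auto.
  - destruct (inner_supp Huv Ha) as [->| ->]; destruct (inner_supp Huv Hb) as [->| ->];
    destruct (inner_supp Huv Hz) as [->| ->]; auto; congruence.
Qed.

Lemma cpx_inner g a b : is_cpx adj g -> g a <> 0 -> g b <> 0 -> a <> b -> inner_of adj g a b.
Proof.
  intros [[v Hv]|[u [v Huv]]] Ha Hb Hab.
  - exfalso. apply Hab. rewrite (vf_supp Hv Ha), (vf_supp Hv Hb). auto.
  - destruct (inner_supp Huv Ha) as [->| ->]; destruct (inner_supp Huv Hb) as [->| ->];
      try congruence; auto using inner_sym.
Qed.

Lemma vf_eq f g v : is_vertex_fun f v -> is_vertex_fun g v -> f = g.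
Proof.
  intros [H1 H2] [H3 H4]. apply functional_extensionality. intro w.
  destruct (classic (w = v)) as [->|Hn]. lra. rewrite H2, H4; auto.
Qed.

Lemma inner_eq f g u v : inner_of adj f u v -> inner_of adj g u v -> f u = g u -> f = g.
Proof.
  intros [H1 [H2 [H3 H4]]] [G1 [G2 [G3 G4]]] E. apply functional_extensionality. intro w.
  destruct (classic (w = u)) as [->|Hn]; auto.
  destruct (classic (w = v)) as [->|Hn']. lra. rewrite H4, G4; auto.
Qed.

Lemma vf_not_inner f v a b : is_vertex_fun f v -> inner_of adj f a b -> False.
Proof.
  intros Hv Hi. pose proof (inner_pos Hi) as [Pa Pb].
  assert (a = v) by (apply (vf_supp Hv); lra). assert (b = v) by (apply (vf_supp Hv); lra).
  subst. destruct Hi as [Hadj _]. exact (Hirr Hadj).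
Qed.

Lemma vf_one f v : is_vertex_fun f v -> f v <> 0.
Proof. intros [H _]; lra. Qed.

Definition vfun (v : V) : V -> R := fun w => if excluded_middle_informative (w = v) then 1 else 0.
Lemma vfun_ok v : is_vertex_fun (vfun v) v.
Proof.
  unfold vfun; split. destruct (excluded_middle_informative (v = v)); congruence.
  intros w Hw. destruct (excluded_middle_informative (w = v)); congruence.
Qed.

Definition efun (u v : V) (lam : R) : V -> R := fun w =>
  if excluded_middle_informative (w = u) then lam else
  if excluded_middle_informative (w = v) then 1 - lam else 0.
Lemma efun_ok u v lam : adj u v -> 0 < lam < 1 -> inner_of adj (efun u v lam) u v.
Proof.
  intros Ha Hl. pose proof (adj_neq Ha) as Hne. unfold efun. split; [auto|]. split.
  destruct (excluded_middle_informative (u = u)); [lra|congruence]. split.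
  destruct (excluded_middle_informative (v = u)); [congruence|].
  destruct (excluded_middle_informative (v = v)); [|congruence].
  destruct (excluded_middle_informative (u = u)); [lra|congruence].
  intros w H1 H2. destruct (excluded_middle_informative (w = u)); [congruence|].
  destruct (excluded_middle_informative (w = v)); [congruence|]. auto.
Qed.
Lemma efun_u u v lam : efun u v lam u = lam.
Proof. unfold efun. destruct (excluded_middle_informative (u = u)); congruence. Qed.
Lemma efun_v u v lam : u <> v -> efun u v lam v = 1 - lam.
Proof. intro H. unfold efun. destruct (excluded_middle_informative (v = u)); [congruence|].
  destruct (excluded_middle_informative (v = v)); congruence. Qed.
Lemma efun_o u v lam w : w <> u -> w <> v -> efun u v lam w = 0.
Proof. intros H1 H2. unfold efun. destruct (excluded_middle_informative (w = u)); [congruence|].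
  destruct (excluded_middle_informative (w = v)); congruence. Qed.

Inductive reach (P : V -> Prop) : V -> V -> Prop :=
| reach0 a : P a -> reach P a a
| reachS a b c : P a -> adj a b -> reach P b c -> reach P a c.

Lemma last_cons (y : V) l d : last (y :: l) d = last l y.
Proof. destruct l; simpl; auto. revert v. induction l; simpl; auto. Qed.

Lemma walk_reach P a l : walk adj a l -> (forall z, In z (a :: l) -> P z) -> reach P a (last l a).
Proof.
  revert a; induction l as [|y l IH]; intros a Hw Hp.
  - apply reach0, Hp; simpl; auto.
  - destruct Hw as [Hay Hw]. rewrite last_cons. apply reachS with y; auto. apply Hp; simpl; auto.
    apply IH; auto. intros z Hz; apply Hp; simpl in *; tauto.
Qed.

Lemma reach_walk P a b : reach P a b ->
  exists l, walk adj a l /\ last l a = b /\ forall z, In z (a :: l) -> P z.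
Proof.
  induction 1 as [a Ha|a b c Ha Hab Hr IH].
  - exists []; simpl; split; auto. split; auto. intros z [->|[]]; auto.
  - destruct IH as [l [H1 [H2 H3]]]. exists (b :: l). split; [simpl; auto|]. split.
    rewrite last_cons; auto. intros z [->|Hz]; auto.
Qed.

Lemma reach_Pl P a b : reach P a b -> P a.
Proof. destruct 1; auto. Qed.
Lemma reach_Pr P a b : reach P a b -> P b.
Proof. induction 1; auto. Qed.

Lemma reach_trans P a b c : reach P a b -> reach P b c -> reach P a c.
Proof. induction 1; intros; auto. eapply reachS; eauto. Qed.

Lemma reach_snoc P a b c : reach P a b -> adj b c -> P c -> reach P a c.
Proof. intros H1 H2 H3. eapply reach_trans; [exact H1|]. eapply reachS; [exact (reach_Pr H1)|exact H2|]. apply reach0; auto. Qed.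

Lemma reach_sym P a b : reach P a b -> reach P b a.
Proof.
  induction 1 as [a Ha|a b c Ha Hab Hr IH]. apply reach0; auto.
  eapply reach_snoc; eauto.
Qed.

Lemma reach_mono (P Q : V -> Prop) a b : (forall z, P z -> Q z) -> reach P a b -> reach Q a b.
Proof. intros HPQ. induction 1; [apply reach0|eapply reachS]; eauto. Qed.

Lemma reach_all P Q a b : reach P a b -> (forall z, reach P a z -> Q z) -> reach Q a b.
Proof.
  intros H. induction H as [a Ha|a b c Ha Hab Hr IH]; intros HQ.
  apply reach0, HQ, reach0; auto.
  apply reachS with b; auto. apply HQ, reach0; auto.
  apply IH. intros z Hz. apply HQ. eapply reachS; eauto.
Qed.

Lemma conn_reach S a b : conn_avoid adj S a b <-> reach (fun z => ~ In z S) a b.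
Proof.
  split.
  - intros [Ha [l [Hw [Hl Hz]]]]. rewrite <- Hl. apply walk_reach; auto.
    intros z [->|Hz']; auto.
  - intros H. split. apply (reach_Pl H). destruct (reach_walk H) as [l [H1 [H2 H3]]].
    exists l; split; auto. split; auto. intros z Hz; apply H3; simpl; auto.
Qed.


Implicit Types (S : list V) (E : (nat -> V) -> Prop) (r : nat -> V).

Lemma conn_sym S a b : conn_avoid adj S a b -> conn_avoid adj S b a.
Proof. rewrite !conn_reach. apply reach_sym. Qed.
Lemma conn_trans S a b c : conn_avoid adj S a b -> conn_avoid adj S b c -> conn_avoid adj S a c.
Proof. rewrite !conn_reach. apply reach_trans. Qed.

Lemma equiv_sym r r' : equiv_rays adj r r' -> equiv_rays adj r' r.
Proof. intros H S. destruct (H S) as [N HN]. exists N. intros n m Hn Hm. apply conn_sym, HN; auto. Qed.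

Lemma equiv_trans r1 r2 r3 : equiv_rays adj r1 r2 -> equiv_rays adj r2 r3 -> equiv_rays adj r1 r3.
Proof.
  intros H1 H2 S. destruct (H1 S) as [N1 HN1]. destruct (H2 S) as [N2 HN2].
  exists (Nat.max N1 N2). intros n m Hn Hm.
  apply conn_trans with (r2 (Nat.max N1 N2)); [apply HN1|apply HN2]; lia.
Qed.

Lemma inC_conn E S a b : is_end adj E -> inC adj S E a -> inC adj S E b -> conn_avoid adj S a b.
Proof.
  intros [r0 [Hr0 HE]] [r [Er [N HN]]] [r' [Er' [N' HN']]].
  apply HE in Er as [_ Er]. apply HE in Er' as [_ Er'].
  assert (Hq : equiv_rays adj r r') by (eapply equiv_trans; [apply equiv_sym; exact Er|exact Er']).
  destruct (Hq S) as [K HK].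
  apply conn_trans with (r (Nat.max N K)). apply HN; lia.
  apply conn_trans with (r' (Nat.max N' K)). apply HK; lia.
  apply conn_sym, HN'; lia.
Qed.

Lemma inC_back E S a b : inC adj S E b -> conn_avoid adj S a b -> inC adj S E a.
Proof.
  intros [r [Er [N HN]]] Hab. exists r; split; auto. exists N. intros n Hn.
  eapply conn_trans; eauto.
Qed.

Lemma conn_mono S1 S2 a b : (forall z, In z S1 -> In z S2) -> conn_avoid adj S2 a b -> conn_avoid adj S1 a b.
Proof. intros Hs. rewrite !conn_reach. apply reach_mono. intros z Hz Hz'. apply Hz, Hs, Hz'. Qed.

Lemma inC_mono S1 S2 E a : (forall z, In z S1 -> In z S2) -> inC adj S2 E a -> inC adj S1 E a.
Proof.
  intros Hs [r [Er [N HN]]]. exists r; split; auto. exists N. intros n Hn.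
  eapply conn_mono; eauto.
Qed.

Lemma inC_notin S E a : inC adj S E a -> ~ In a S.
Proof. intros [r [_ [N HN]]]. destruct (HN N (le_n N)) as [H _]. exact H. Qed.

Lemma ray_avoid r : is_ray adj r -> forall S, exists N, forall n, (N <= n)%nat -> ~ In (r n) S.
Proof.
  intros [Hinj Hadj] S. induction S as [|x S IH].
  - exists 0%nat. intros n _ [].
  - destruct IH as [N HN].
    destruct (classic (exists k, r k = x)) as [[k Hk]|Hno].
    + exists (Nat.max N (k+1)). intros n Hn [Hx|Hx].
      * rewrite <- Hk in Hx. apply Hinj in Hx. lia.
      * apply (HN n); auto; lia.
    + exists N. intros n Hn [Hx|Hx]. apply Hno; eauto. apply (HN n); auto.
Qed.

Lemma ray_tail r : is_ray adj r -> forall S, exists N, forall n m, (N <= n)%nat -> (N <= m)%nat ->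
  conn_avoid adj S (r n) (r m).
Proof.
  intros Hr S. destruct (ray_avoid Hr S) as [N HN]. exists N.
  assert (Hup : forall k n, (N <= n)%nat -> reach (fun z => ~ In z S) (r n) (r (n + k)%nat)).
  { induction k as [|k IH]; intros n Hn.
    - rewrite Nat.add_0_r. apply reach0. apply HN; auto.
    - apply reach_snoc with (r (n + k)%nat); auto.
      rewrite Nat.add_succ_r. idtac. apply (proj2 Hr).
      apply HN; lia. }
  intros n m Hn Hm. apply conn_reach.
  destruct (Nat.le_ge_cases n m) as [H|H].
  - replace m with (n + (m - n))%nat by lia. apply Hup; auto.
  - apply reach_sym. replace n with (m + (n - m))%nat by lia. apply Hup; auto.
Qed.

Lemma end_ray E r : is_end adj E -> E r -> is_ray adj r.
Proof. intros [r0 [_ HE]] Er. apply HE in Er; tauto. Qed.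

Lemma end_tail_inC E r : is_end adj E -> E r -> forall S, exists N, forall n, (N <= n)%nat -> inC adj S E (r n).
Proof.
  intros HE Er S. destruct (ray_tail (end_ray HE Er) S) as [N HN]. exists N. intros n Hn.
  exists r; split; auto. exists N. intros m Hm. apply HN; auto.
Qed.

Lemma end_sep E E' : is_end adj E -> is_end adj E' ->
  (forall S, exists z, inC adj S E z /\ inC adj S E' z) -> E = E'.
Proof.
  intros HE HE' H.
  destruct HE as [r0 [Hr0 HE]]. destruct HE' as [r1 [Hr1 HE']].
  assert (Hq : equiv_rays adj r0 r1).
  { intros S. destruct (H S) as [z [[r [Er [N HN]]] [r' [Er' [N' HN']]]]].
    apply HE in Er as [_ Er]. apply HE' in Er' as [_ Er'].
    destruct (Er S) as [K HK]. destruct (Er' S) as [K' HK'].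
    exists (Nat.max K K'). intros n m Hn Hm.
    apply conn_trans with (r (Nat.max N K)). apply HK; lia.
    apply conn_trans with z. apply conn_sym, HN; lia.
    apply conn_trans with (r' (Nat.max N' K')). apply HN'; lia.
    apply conn_sym, HK'; lia. }
  apply functional_extensionality. intro r. apply propositional_extensionality.
  rewrite HE, HE'. split; intros [H1 H2]; split; auto.
  eapply equiv_trans; [apply equiv_sym; exact Hq|exact H2].
  eapply equiv_trans; [exact Hq|exact H2].
Qed.


Implicit Types (alpha : R -> point V) (A : point V -> Prop) (p q : point V).

Definition ball f eps (q : point V) : Prop :=
  valid adj q /\ exists g, q = Cpx g /\ forall w, Rabs (g w - f w) < eps.

Lemma ball_basic f eps : 0 < eps -> basic_nbhd adj (Cpx f) (ball f eps).
Proof. intro He. exists eps. split; auto. intro q. unfold ball. tauto. Qed.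

Lemma arc_valid alpha A t : arc_param adj alpha A -> unit_interval t -> valid adj (alpha t).
Proof. intros [H _] Ht. auto. Qed.
Lemma arc_inA alpha A t : arc_param adj alpha A -> unit_interval t -> A (alpha t).
Proof. intros [_ [H _]] Ht. apply H. eauto. Qed.
Lemma arc_surj alpha A p : arc_param adj alpha A -> A p -> exists t, unit_interval t /\ alpha t = p.
Proof. intros [_ [H _]] Hp. apply H; auto. Qed.
Lemma arc_inj alpha A s t : arc_param adj alpha A -> unit_interval s -> unit_interval t ->
  alpha s = alpha t -> s = t.
Proof. intros [_ [_ [H _]]]. auto. Qed.

Lemma cont_cpx alpha A t f : arc_param adj alpha A -> unit_interval t -> alpha t = Cpx f ->
  forall eps, 0 < eps -> exists d, 0 < d /\ forall s, unit_interval s -> Rabs (t - s) < d ->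
    exists g, alpha s = Cpx g /\ is_cpx adj g /\ forall w, Rabs (g w - f w) < eps.
Proof.
  intros [_ [_ [_ [Hc _]]]] Ht Hf eps He.
  destruct (Hc t Ht (ball f eps)) as [d [Hd Hd2]]. rewrite Hf; apply ball_basic; auto.
  exists d; split; auto. intros s Hs Hts. destruct (Hd2 s Hs Hts) as [Hv [g [Hg Hg2]]].
  exists g; split; auto. split; auto. rewrite Hg in Hv. exact Hv.
Qed.

Lemma cont_end alpha A t E : arc_param adj alpha A -> unit_interval t -> alpha t = Endp E ->
  forall S, exists d, 0 < d /\ forall s, unit_interval s -> Rabs (t - s) < d -> inChat adj S E (alpha s).
Proof.
  intros [_ [_ [_ [Hc _]]]] Ht Hf S.
  destruct (Hc t Ht (fun q => valid adj q /\ inChat adj S E q)) as [d [Hd Hd2]].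
  rewrite Hf. exists S. tauto.
  exists d; split; auto. intros s Hs Hts. apply Hd2; auto.
Qed.

Lemma inv_cont alpha A t f : arc_param adj alpha A -> unit_interval t -> alpha t = Cpx f ->
  forall eps, 0 < eps -> exists eta, 0 < eta /\ forall s, unit_interval s -> ball f eta (alpha s) ->
    Rabs (t - s) < eps.
Proof.
  intros [_ [_ [_ [_ Hci]]]] Ht Hf eps He.
  destruct (Hci t Ht eps He) as [N [HN HN2]]. rewrite Hf in HN. destruct HN as [eta [Heta HN]].
  exists eta; split; auto. intros s Hs Hb. apply HN2; auto. apply HN. exact Hb.
Qed.

Lemma arc_rev alpha A : arc_param adj alpha A -> arc_param adj (fun s => alpha (1 - s)) A.
Proof.
  unfold unit_interval.
  intros [H1 [H2 [H3 [H4 H5]]]]. split; [|split; [|split; [|split]]].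
  - intros x Hx. apply H1. unfold unit_interval in *; lra.
  - intro p. rewrite H2. split; intros [x [Hx Hp]]; exists (1 - x); (split; [unfold unit_interval in *; lra|]).
    replace (1 - (1 - x)) with x by ring; auto. auto.
  - intros x y Hx Hy Hxy. apply H3 in Hxy; unfold unit_interval in *; lra.
  - intros x Hx N HN. destruct (H4 (1 - x) ltac:(unfold unit_interval in *; lra) N HN) as [d [Hd Hd2]].
    exists d; split; auto. intros y Hy Hxy. apply Hd2. unfold unit_interval in *; lra.
    replace (1 - x - (1 - y)) with (- (x - y)) by ring. rewrite Rabs_Ropp; auto.
  - intros x Hx eps He. destruct (H5 (1 - x) ltac:(unfold unit_interval in *; lra) eps He) as [N [HN HN2]].
    exists N; split; auto. intros y Hy Hn. specialize (HN2 (1 - y) ltac:(unfold unit_interval in *; lra) Hn).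
    replace (x - y) with (- (1 - x - (1 - y))) by ring. rewrite Rabs_Ropp; auto.
Qed.

Lemma closure_in_sub (HV : V -> Prop) HE p : in_sub adj HV HE p -> closure adj (in_sub adj HV HE) p.
Proof.
  intro Hp. assert (Hv : valid adj p).
  { destruct Hp as [[v [_ [f [-> Hf]]]]|[f [u [v [-> [_ Hi]]]]]]; simpl.
    left; eauto. right; eauto. }
  split; auto. intros N HN. exists p; split; auto.
  destruct p as [f|E]. destruct HN as [eps [He HN]]. apply HN. split; auto. exists f; split; auto.
  intro w. rewrite Rminus_diag, Rabs_R0; auto.
  destruct Hp as [[v [_ [f [Hf _]]]]|[f [u [v [Hf _]]]]]; discriminate.
Qed.

Lemma closure_nonempty P p : closure adj P p -> exists q, P q.
Proof.
  intros [Hv H]. destruct p as [f|E].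
  - destruct (H (ball f 1)) as [q [_ Hq]]. apply ball_basic; lra. eauto.
  - destruct (H (fun q => valid adj q /\ inChat adj [] E q)) as [q [_ Hq]]. exists []; tauto. eauto.
Qed.

Lemma closure_vertex (HV : V -> Prop) HE p u : closure adj (in_sub adj HV HE) p -> vtx_at p u ->
  HV u \/ exists z, HE u z \/ HE z u.
Proof.
  intros [_ H] [f [-> Hf]]. destruct (H (ball f (1/2))) as [q [[Hqv [g [-> Hg]]] Hq]].
  apply ball_basic; lra.
  assert (Hgu : g u <> 0).
  { specialize (Hg u). destruct Hf as [Hf1 _]. rewrite Hf1 in Hg. intro E0. rewrite E0 in Hg.
    rewrite Rabs_left1 in Hg by lra. lra. }
  destruct Hq as [[v [Hv [g' [Heq Hg']]]]|[g' [a [b [Heq [Hab Hi]]]]]]; injection Heq; intros; subst g'.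
  - left. rewrite <- (vf_supp Hg' Hgu) in Hv. exact Hv.
  - right. destruct (inner_supp Hi Hgu) as [->| ->]. exists b; auto. exists a; auto.
Qed.

Lemma closure_edge (HV : V -> Prop) HE f u v : closure adj (in_sub adj HV HE) (Cpx f) -> inner_of adj f u v ->
  HE u v \/ HE v u.
Proof.
  intros [_ H] Hi. pose proof (inner_pos Hi) as [Pu Pv].
  destruct (H (ball f (Rmin (f u) (f v)))) as [q [[Hqv [g [-> Hg]]] Hq]].
  apply ball_basic; apply Rmin_glb_lt; lra.
  assert (Hgu : g u <> 0).
  { specialize (Hg u). pose proof (Rmin_l (f u) (f v)). intro E0. rewrite E0 in Hg.
    rewrite Rabs_left1 in Hg by lra. lra. }
  assert (Hgv : g v <> 0).
  { specialize (Hg v). pose proof (Rmin_r (f u) (f v)). intro E0. rewrite E0 in Hg.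
    rewrite Rabs_left1 in Hg by lra. lra. }
  pose proof (adj_neq (proj1 Hi)) as Hne.
  destruct Hq as [[x [Hx [g' [Heq Hg']]]]|[g' [a [b [Heq [Hab Hi']]]]]]; injection Heq; intros; subst g'.
  - exfalso. apply Hne. rewrite (vf_supp Hg' Hgu), (vf_supp Hg' Hgv). auto.
  - destruct (inner_supp Hi' Hgu) as [->| ->]; destruct (inner_supp Hi' Hgv) as [->| ->]; auto; congruence.
Qed.


Definition ev (p : point V) (w : V) : R := match p with Cpx g => g w | Endp _ => 0 end.

Lemma abs_lt_pos (x y e : R) : Rabs (x - y) < e -> y - e < x < y + e.
Proof. intro H. destruct (Rle_dec 0 (x - y)). rewrite Rabs_right in H; lra. rewrite Rabs_left in H; lra. Qed.

Lemma abs_lt_intro (x y e : R) : y - e < x -> x < y + e -> Rabs (x - y) < e.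
Proof. intros. destruct (Rle_dec 0 (x - y)). rewrite Rabs_right; lra. rewrite Rabs_left; lra. Qed.

Lemma endpoint alpha A f u z : arc_param adj alpha A -> alpha 0 = Cpx f -> inner_of adj f u z ->
  (forall lam, 0 < lam < 1 -> A (Cpx (efun u z lam))) -> False.
Proof.
  intros Harc H0 Hi HA.
  pose proof (inner_pos Hi) as [Pu Pz]. pose proof (adj_neq (proj1 Hi)) as Hne.
  pose proof Hi as [Hadj [_ [Hfz Hfo]]].
  assert (U0 : unit_interval 0) by (split; lra).
  set (eps := Rmin (f u) (f z)).
  assert (Heps : 0 < eps) by (apply Rmin_glb_lt; lra).
  assert (Eu : eps <= f u) by apply Rmin_l. assert (Ez : eps <= f z) by apply Rmin_r.
  destruct (cont_cpx Harc U0 H0 Heps) as [d [Hd Hd2]].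
  assert (Near : forall s, unit_interval s -> s < d -> exists g, alpha s = Cpx g /\ inner_of adj g u z /\ forall w, Rabs (g w - f w) < eps).
  { intros s Hs Hsd. destruct (Hd2 s Hs) as [g [Hg [Hgc Hgw]]].
    rewrite Rabs_left1; destruct Hs; lra.
    exists g; split; auto. split; auto. apply cpx_inner; auto.
    intro E0; specialize (Hgw u); rewrite E0 in Hgw; apply abs_lt_pos in Hgw; lra.
    intro E0; specialize (Hgw z); rewrite E0 in Hgw; apply abs_lt_pos in Hgw; lra. }
  destruct (inv_cont Harc U0 H0 Hd) as [eta [Heta Hinv]].
  set (e := Rmin eta eps / 2).
  assert (He : 0 < e) by (unfold e; assert (0 < Rmin eta eps) by (apply Rmin_glb_lt; lra); lra).
  assert (He1 : e < eta) by (unfold e; pose proof (Rmin_l eta eps); lra).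
  assert (He2 : e < eps) by (unfold e; pose proof (Rmin_r eta eps); lra).
  assert (Hpt : forall sg, (sg = 1 \/ sg = -1) -> exists s, unit_interval s /\ 0 < s /\ s < d /\ ev (alpha s) u = f u + sg * e).
  { intros sg Hsg.
    assert (Hl : 0 < f u + sg * e < 1) by (destruct Hsg as [->| ->]; lra).
    destruct (arc_surj Harc (HA _ Hl)) as [s [Hs Has]].
    assert (Hb : ball f eta (alpha s)).
    { rewrite Has. split. right. exists u, z. apply efun_ok; auto.
      exists (efun u z (f u + sg * e)). split; auto. intro w.
      destruct (classic (w = u)) as [->|Hwu]. rewrite efun_u. apply abs_lt_intro; destruct Hsg as [->| ->]; lra.
      destruct (classic (w = z)) as [->|Hwz]. rewrite efun_v by auto. apply abs_lt_intro; destruct Hsg as [->| ->]; lra.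
      rewrite efun_o, Hfo by auto. rewrite Rminus_diag, Rabs_R0; auto. }
    specialize (Hinv s Hs Hb). rewrite Rabs_left1 in Hinv by (destruct Hs; lra).
    exists s. split; auto. split.
    - destruct Hs as [Hs0 _]. destruct (Rle_lt_or_eq_dec 0 s Hs0) as [|E0]; auto.
      exfalso. subst s. rewrite H0 in Has. injection Has; intro Hff.
      pose proof (f_equal (fun k => k u) Hff) as Hx. simpl in Hx. rewrite efun_u in Hx.
      destruct Hsg as [->| ->]; lra.
    - split; [lra|]. rewrite Has. simpl. apply efun_u. }
  destruct (Hpt 1 (or_introl eq_refl)) as [sp [Usp [Psp [Dsp Hsp]]]].
  destruct (Hpt (-1) (or_intror eq_refl)) as [sm [Usm [Psm [Dsm Hsm]]]].
  set (h := fun s => ev (alpha s) u).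
  assert (Hcont : forall lo0 b0 : R, 0 <= lo0 -> b0 < d -> b0 <= 1 -> cont_on h lo0 b0).
  { intros lo0 b0 Ha Hb Hb1 t Ht eps' He'.
    assert (Ut : unit_interval t) by (split; lra).
    destruct (Near t Ut ltac:(lra)) as [gt [Hgt _]].
    destruct (cont_cpx Harc Ut Hgt He') as [d' [Hd' Hd'2]].
    exists d'; split; auto. intros s Hs Hts. destruct (Hd'2 s ltac:(split; lra) Hts) as [g [Hg [_ Hgw]]].
    unfold h. rewrite Hg, Hgt. simpl. auto. }
  assert (Hc : exists tc, 0 < tc /\ tc < d /\ tc <= 1 /\ h tc = f u).
  { destruct (Rlt_le_dec sm sp) as [Hlt|Hle].
    - destruct (IVT_up (y := f u) (Rlt_le _ _ Hlt) (Hcont sm sp ltac:(lra) Dsp ltac:(destruct Usp; lra)))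
        as [tc [Hc1 Hc2]]; unfold h; [rewrite Hsm; lra|rewrite Hsp; lra|].
      exists tc. destruct Usp. repeat split; auto; lra.
    - destruct (IVT_down (y := f u) Hle (Hcont sp sm ltac:(lra) Dsm ltac:(destruct Usm; lra)))
        as [tc [Hc1 Hc2]]; unfold h; [rewrite Hsp; lra|rewrite Hsm; lra|].
      exists tc. destruct Usm. repeat split; auto; lra. }
  destruct Hc as [tc [Pc [Dc [Lc Hc]]]].
  destruct (Near tc ltac:(split; lra) Dc) as [g [Hg [Hig _]]].
  unfold h in Hc. rewrite Hg in Hc. simpl in Hc.
  assert (g = f) by (apply (inner_eq Hig Hi); auto). subst g.
  assert (tc = 0) by (apply (arc_inj Harc); [split; lra|auto|congruence]). lra.
Qed.


Lemma pick_left (lo t0 d0 : R) : lo < t0 -> 0 < d0 -> exists s, lo <= s < t0 /\ t0 - s < d0.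
Proof.
  intros H1 H2. exists (Rmax lo (t0 - d0/2)). pose proof (Rmax_l lo (t0 - d0/2)).
  pose proof (Rmax_r lo (t0 - d0/2)). split; [split; auto|]. apply Rmax_lub_lt; lra. lra.
Qed.
Lemma pick_right (t0 hi d0 : R) : t0 < hi -> 0 < d0 -> exists s, t0 < s <= hi /\ s - t0 < d0.
Proof.
  intros H1 H2. exists (Rmin hi (t0 + d0/2)). pose proof (Rmin_l hi (t0 + d0/2)).
  pose proof (Rmin_r hi (t0 + d0/2)). split; [split; auto|]. apply Rmin_glb_lt; lra. lra.
Qed.

Lemma arc_cpx alpha A s g : arc_param adj alpha A -> unit_interval s -> alpha s = Cpx g -> is_cpx adj g.
Proof. intros Harc Us Hg. pose proof (arc_valid Harc Us) as Hv. rewrite Hg in Hv. exact Hv. Qed.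

Arguments pick_left lo t0 {d0}.
Arguments pick_right t0 hi {d0}.

Lemma vtx_unique alpha A s t z : arc_param adj alpha A -> unit_interval s -> unit_interval t ->
  vtx_at (alpha s) z -> vtx_at (alpha t) z -> s = t.
Proof.
  intros Harc Hs Ht [f [Hf Hvf]] [g [Hg Hvg]]. apply (arc_inj Harc); auto.
  rewrite Hf, Hg. f_equal. eapply vf_eq; eauto.
Qed.

Lemma vtx_inj p z z' : vtx_at p z -> vtx_at p z' -> z = z'.
Proof.
  intros [f [Hf Hvf]] [g [Hg Hvg]]. rewrite Hf in Hg. injection Hg; intros; subst.
  apply (vf_supp Hvg). apply (vf_one Hvf).
Qed.

Lemma pos_of_near (x y e : R) : Rabs (x - y) < e -> e <= y -> 0 < x.
Proof. intros H1 H2. apply abs_lt_pos in H1. lra. Qed.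

Lemma abs_sym (x y : R) : Rabs (x - y) = Rabs (y - x).
Proof. rewrite <- Rabs_Ropp. f_equal. ring. Qed.

Variables (tV : V -> Prop) (tE : V -> V -> Prop).
Hypothesis HtV : forall v, tV v.
Hypothesis HtEs : forall u v, tE u v -> tE v u.
Hypothesis HtEa : forall u v, tE u v -> adj u v.

Definition AT := closure adj (in_sub adj (TmL_V tV tE) (TmL_E tV tE)).

Lemma spine_of_AT p z : AT p -> vtx_at p z -> TmL_V tV tE z.
Proof.
  intros Hp Hv. destruct (closure_vertex Hp Hv) as [H|[x [[H1 [H2 H3]]|[H1 [H2 H3]]]]]; auto.
  split; auto. split; auto.
Qed.

Lemma edges_in_AT f u z : AT (Cpx f) -> inner_of adj f u z ->
  forall lam, 0 < lam < 1 -> AT (Cpx (efun u z lam)).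
Proof.
  intros Hp Hi lam Hl. pose proof (proj1 Hi) as Ha.
  apply closure_in_sub. right. destruct (closure_edge Hp Hi) as [H|H].
  - exists (efun u z lam), u, z. split; auto. split; auto. apply efun_ok; auto.
  - exists (efun u z lam), z, u. split; auto. split; auto. apply inner_sym, efun_ok; auto.
Qed.

Lemma pred_ex alpha u t : arc_param adj alpha AT -> unit_interval t -> vtx_at (alpha t) u -> 0 < t ->
  exists z t', TmL_V tV tE z /\ unit_interval t' /\ vtx_at (alpha t') z /\ t' < t /\
   forall s, t' < s < t -> forall w, ~ vtx_at (alpha s) w.
Proof.
  intros Harc Ut [f [Hf Hvf]] Ht0.
  assert (Hhalf : 0 < 1/2) by lra.
  destruct (cont_cpx Harc Ut Hf Hhalf) as [d0 [Hd0 Hd0']].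
  assert (NotU : forall s g, unit_interval s -> s <> t -> alpha s = Cpx g -> ~ is_vertex_fun g u).
  { intros s g Us Hst Hg Hvg. apply Hst. apply (arc_inj Harc Us Ut). rewrite Hg, Hf. f_equal. eapply vf_eq; eauto. }
  assert (Edge : forall s, unit_interval s -> s <> t -> Rabs (t - s) < d0 ->
            exists g z', alpha s = Cpx g /\ inner_of adj g u z').
  { intros s Us Hst Hts. destruct (Hd0' s Us Hts) as [g [Hg [Hgc Hgw]]].
    assert (Hgu : g u <> 0).
    { specialize (Hgw u). destruct Hvf as [Hf1 _]. rewrite Hf1 in Hgw. apply abs_lt_pos in Hgw. lra. }
    destruct Hgc as [[v Hv]|[a [b Hab]]].
    - exfalso. apply (NotU s g Us Hst Hg). rewrite <- (vf_supp Hv Hgu) in Hv. exact Hv.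
    - exists g. destruct (inner_supp Hab Hgu) as [<-| <-]. exists b; auto. exists a. split; auto. apply inner_sym; auto. }
  destruct (pick_left 0 t Ht0 Hd0) as [t1 [Ht1 Ht1']].
  assert (Ut1 : unit_interval t1) by (destruct Ut; split; lra).
  destruct (Edge t1 Ut1 ltac:(lra) ltac:(rewrite Rabs_right; lra)) as [g1 [z [Hg1 Hi1]]].
  pose proof (adj_neq (proj1 Hi1)) as Hne.
  set (Pz := fun s => exists g, alpha s = Cpx g /\ g u <> 0 /\ g z <> 0).
  assert (Pt1 : Pz t1). { exists g1. pose proof (inner_pos Hi1). split; auto. split; lra. }
  assert (Ext : forall s g, unit_interval s -> alpha s = Cpx g -> g u <> 0 -> g z <> 0 ->
            exists d, 0 < d /\ forall s', unit_interval s' -> Rabs (s - s') < d -> Pz s').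
  { intros s g Us Hg Hgu Hgz.
    assert (Hgi : inner_of adj g u z) by (apply cpx_inner; auto; exact (arc_cpx Harc Us Hg)).
    pose proof (inner_pos Hgi) as [Pu Pz'].
    destruct (cont_cpx Harc Us Hg (eps := Rmin (g u) (g z)) ltac:(apply Rmin_glb_lt; lra)) as [d [Hd Hd']].
    exists d; split; auto. intros s' Us' Hss. destruct (Hd' s' Us' Hss) as [h [Hh [_ Hhw]]].
    exists h; split; auto. split.
    - pose proof (Hhw u). apply pos_of_near in H. lra. apply Rmin_l.
    - pose proof (Hhw z). apply pos_of_near in H. lra. apply Rmin_r. }
  assert (Right : forall s, t1 <= s < t -> Pz s).
  { intros s Hs. apply (@RI Pz t1 s); try lra; auto.
    intros tau Htau Hbel.
    assert (Utau : unit_interval tau) by (destruct Ut; split; lra).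
    destruct (Edge tau Utau ltac:(lra) ltac:(rewrite Rabs_right; lra)) as [gt [z'' [Hgt Hit]]].
    pose proof (inner_pos Hit) as [Pu'' Pz''].
    assert (Hvalid : forall x, unit_interval x -> forall h, alpha x = Cpx h -> is_cpx adj h).
    { intros x Ux h Hh. pose proof (arc_valid Harc Ux) as Hv. rewrite Hh in Hv. exact Hv. }
    assert (Ez : z'' = z).
    { destruct (Req_dec tau t1) as [->|Hne1].
      - rewrite Hg1 in Hgt. injection Hgt; intros; subst gt.
        destruct (inner_supp Hi1 (z := z'') ltac:(lra)) as [->|]; auto.
        exfalso; exact (adj_neq (proj1 Hit) eq_refl).
      - destruct (cont_cpx Harc Utau Hgt (eps := gt z'') Pz'') as [d [Hd Hd']].
        destruct (pick_left t1 tau ltac:(lra) Hd) as [s' [Hs' Hs'']].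
        destruct (Hbel s' Hs') as [h [Hh [Hhu Hhz]]].
        destruct (Hd' s' ltac:(destruct Ut; split; lra) ltac:(rewrite Rabs_right; lra)) as [h' [Hh' [_ Hhw]]].
        rewrite Hh in Hh'. injection Hh'; intros; subst h'.
        assert (h z'' <> 0) by (pose proof (Hhw z'') as HH; apply pos_of_near in HH; lra).
        destruct (cpx_supp2 (Hvalid s' ltac:(destruct Ut; split; lra) h Hh) Hhu Hhz Hne H) as [->|]; auto.
        exfalso; exact (adj_neq (proj1 Hit) eq_refl). }
    subst z''.
    destruct (Ext tau gt Utau Hgt ltac:(lra) ltac:(lra)) as [d [Hd Hd']].
    exists d; split; auto. intros s' Hs' Hs'b. apply Hd'. destruct Ut; split; lra.
    rewrite Rabs_left1; lra. }
  assert (LeftExt : forall lo0, 0 <= lo0 <= t1 ->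
            (forall s, lo0 <= s <= t1 -> ~ vtx_at (alpha s) z) -> forall s, lo0 <= s <= t1 -> Pz s).
  { intros lo0 Ha0 Hnz. apply RI_left; [lra|auto|].
    intros tau Htau Hab.
    assert (Utau : unit_interval tau) by (destruct Ut; split; lra).
    assert (Ptau : Pz tau).
    { destruct (Req_dec tau t1) as [->|Hne1]; auto.
      assert (Hlt : tau < t1) by lra.
      destruct (alpha tau) as [ft|E] eqn:Hat.
      - assert (Hzero : forall w, w <> u -> w <> z -> ft w = 0).
        { intros w Hwu Hwz. apply NNPP. intro Hfw.
          assert (Habs : 0 < Rabs (ft w)) by (apply Rabs_pos_lt; auto).
          destruct (cont_cpx Harc Utau Hat Habs) as [d [Hd Hd']].
          destruct (pick_right tau t1 Hlt Hd) as [s' [Hs' Hs'']].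
          destruct (Hab s' Hs') as [h [Hh [Hhu Hhz]]].
          destruct (Hd' s' ltac:(destruct Ut; split; lra) ltac:(rewrite Rabs_left1; lra)) as [h' [Hh' [Hhc Hhw]]].
          rewrite Hh in Hh'. injection Hh'; intros; subst h'.
          assert (Hhw0 : h w = 0).
          { apply NNPP; intro Hn. destruct (cpx_supp2 Hhc Hhu Hhz Hne Hn); auto. }
          specialize (Hhw w). rewrite Hhw0, Rminus_0_l, Rabs_Ropp in Hhw. lra. }
        assert (Hvt : is_cpx adj ft) by (pose proof (arc_valid Harc Utau) as Hv; rewrite Hat in Hv; exact Hv).
        assert (InUZ : forall w, ft w <> 0 -> w = u \/ w = z).
        { intros w Hw. destruct (classic (w = u)); auto. destruct (classic (w = z)); auto.
          exfalso; apply Hw, Hzero; auto. }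
        destruct Hvt as [[v Hv]|[a [b Hab']]].
        + exfalso. destruct (InUZ v (vf_one Hv)) as [->| ->].
          * apply (NotU tau ft Utau ltac:(lra) Hat Hv).
          * apply (Hnz tau ltac:(lra)). exists ft; auto.
        + pose proof (inner_pos Hab') as [Pa Pb]. pose proof (adj_neq (proj1 Hab')) as Hab''.
          exists ft. split; auto.
          destruct (InUZ a ltac:(lra)) as [->| ->]; destruct (InUZ b ltac:(lra)) as [->| ->];
            try (exfalso; apply Hab''; reflexivity); split; lra.
      - exfalso.
        destruct (cont_end Harc Utau Hat [u; z]) as [d [Hd Hd']].
        destruct (pick_right tau t1 Hlt Hd) as [s' [Hs' Hs'']].
        destruct (Hab s' Hs') as [h [Hh [Hhu Hhz]]].
        pose proof (Hd' s' ltac:(destruct Ut; split; lra) ltac:(rewrite Rabs_left1; lra)) as Hc.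
        rewrite Hh in Hc. destruct Hc as [w [Hw Hcw]].
        assert (Hhc : is_cpx adj h) by (pose proof (arc_valid Harc (t := s') ltac:(destruct Ut; split; lra)) as Hv; rewrite Hh in Hv; exact Hv).
        apply (inC_notin Hcw). destruct (cpx_supp2 Hhc Hhu Hhz Hne Hw) as [->| ->]; simpl; auto. }
    destruct Ptau as [gt [Hgt [Hgu Hgz]]].
    destruct (Ext tau gt Utau Hgt Hgu Hgz) as [d [Hd Hd']].
    exists d; split; auto. intros s' Hs' Hs'a. apply Hd'. destruct Ut; split; lra.
    rewrite Rabs_right; lra. }
  assert (Hz : exists sz, 0 <= sz <= t1 /\ vtx_at (alpha sz) z).
  { apply NNPP. intro Hn.
    assert (P0 : Pz 0).
    { apply (LeftExt 0); try lra. intros s Hs Hv. apply Hn. exists s; split; auto. }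
    destruct P0 as [g0 [Hg0 [Hg0u Hg0z]]].
    assert (U0 : unit_interval 0) by (split; lra).
    assert (Hv0 : is_cpx adj g0) by (pose proof (arc_valid Harc U0) as Hv; rewrite Hg0 in Hv; exact Hv).
    pose proof (cpx_inner Hv0 Hg0u Hg0z Hne) as Hi0.
    assert (HA0 : AT (Cpx g0)) by (rewrite <- Hg0; apply (arc_inA Harc U0)).
    exact (endpoint Harc Hg0 Hi0 (edges_in_AT HA0 Hi0)). }
  destruct Hz as [sz [Hsz Hvz]].
  assert (Usz : unit_interval sz) by (destruct Ut; split; lra).
  assert (Hsz1 : sz < t1).
  { destruct (Req_dec sz t1) as [->|]; [|lra]. exfalso.
    destruct Pt1 as [g [Hg [Hgu _]]]. destruct Hvz as [g' [Hg' Hvg']]. rewrite Hg in Hg'.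
    injection Hg'; intros; subst g'. apply Hne. apply (vf_supp Hvg' Hgu). }
  exists z, sz. split; [apply (spine_of_AT (arc_inA Harc Usz) Hvz)|].
  split; auto. split; auto. split; [lra|].
  intros s Hs w Hw.
  assert (Ps : Pz s).
  { destruct (Rle_dec t1 s). apply Right; lra.
    apply (LeftExt s); try lra. intros s' Hs' Hv'.
    assert (sz = s') by (apply (vtx_unique (z := z) Harc); auto; destruct Ut; split; lra). lra. }
  destruct Ps as [g [Hg [Hgu Hgz]]]. destruct Hw as [g' [Hg' Hvg']]. rewrite Hg in Hg'.
  injection Hg'; intros; subst g'. apply Hne. rewrite (vf_supp Hvg' Hgu), (vf_supp Hvg' Hgz). auto.
Qed.


Lemma succ_ex alpha u t : arc_param adj alpha AT -> unit_interval t -> vtx_at (alpha t) u -> t < 1 ->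
  exists z t', TmL_V tV tE z /\ unit_interval t' /\ vtx_at (alpha t') z /\ t < t' /\
   forall s, t < s < t' -> forall w, ~ vtx_at (alpha s) w.
Proof.
  intros Harc Ut Hv Ht1.
  pose proof (arc_rev Harc) as Hrev.
  destruct (pred_ex (u := u) (t := 1 - t) Hrev) as [z [t'' [Hz [Ut'' [Hvz [Hlt Hno]]]]]].
  - destruct Ut; split; lra.
  - replace (1 - (1 - t)) with t by ring. exact Hv.
  - lra.
  - exists z, (1 - t''). split; auto. split; [destruct Ut''; split; lra|]. split; auto. split; [lra|].
    intros s Hs w Hw. apply (Hno (1 - s) ltac:(lra) w). replace (1 - (1 - s)) with s by ring. exact Hw.
Qed.

Section Cls.
Variable alpha : R -> point V.
Hypothesis Harc : arc_param adj alpha AT.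

Lemma pos_ex v : TmL_V tV tE v -> exists t, posA alpha v t.
Proof.
  intro Hv. assert (HA : AT (Cpx (vfun v))).
  { apply closure_in_sub. left. exists v. split; auto. exists (vfun v). split; auto. apply vfun_ok. }
  destruct (arc_surj Harc HA) as [t [Ut Ht]]. exists t. split; auto. rewrite Ht. exists (vfun v); split; auto. apply vfun_ok.
Qed.

Lemma pos_uniq v s t : posA alpha v s -> posA alpha v t -> s = t.
Proof. intros [Us Hs] [Ut Ht]. exact (vtx_unique Harc Us Ut Hs Ht). Qed.

Lemma pos_inj v w t : posA alpha v t -> posA alpha w t -> v = w.
Proof. intros [_ H1] [_ H2]. exact (vtx_inj H1 H2). Qed.

Lemma pos_spine v t : posA alpha v t -> TmL_V tV tE v.
Proof. intros [Ut Hv]. exact (spine_of_AT (arc_inA Harc Ut) Hv). Qed.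

Lemma ltA_iff a b s t : posA alpha a s -> posA alpha b t -> (ltA alpha a b <-> s < t).
Proof.
  intros Ha Hb. split.
  - intros [s' [t' [Ha' [Hb' Hlt]]]]. rewrite (pos_uniq Ha Ha'), (pos_uniq Hb Hb'). auto.
  - intro H. exists s, t. auto.
Qed.

Lemma pred_pos u t : posA alpha u t -> 0 < t ->
  exists z t', posA alpha z t' /\ t' < t /\ TmL_V tV tE z /\
    forall w s, posA alpha w s -> ~ (t' < s < t).
Proof.
  intros [Ut Hv] Ht. destruct (pred_ex Harc Ut Hv Ht) as [z [t' [Hz [Ut' [Hvz [Hlt Hno]]]]]].
  exists z, t'. split; [split; auto|]. split; auto. split; auto.
  intros w s [Us Hws] Hs. exact (Hno s Hs w Hws).
Qed.

Lemma succ_pos u t : posA alpha u t -> t < 1 ->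
  exists z t', posA alpha z t' /\ t < t' /\ TmL_V tV tE z /\
    forall w s, posA alpha w s -> ~ (t < s < t').
Proof.
  intros [Ut Hv] Ht. destruct (succ_ex Harc Ut Hv Ht) as [z [t' [Hz [Ut' [Hvz [Hlt Hno]]]]]].
  exists z, t'. split; [split; auto|]. split; auto. split; auto.
  intros w s [Us Hws] Hs. exact (Hno s Hs w Hws).
Qed.

Lemma cls_spine u t : TmL_V tV tE u -> posA alpha u t -> cls tV tE alpha u (Some u).
Proof.
  intros Hu Hp. pose proof Hp as [[Ut0 Ut1] Hv]. destruct (Rle_lt_or_eq_dec 0 t Ut0) as [Hlt|Heq].
  - left. destruct (pred_pos Hp Hlt) as [z [t' [Hz [Hzt [Hzs Hno]]]]].
    exists z. split; auto. split; auto. split; auto. split. apply (ltA_iff Hz Hp); auto.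
    intros [w [Hw [H1 H2]]]. destruct (pos_ex Hw) as [sw Hsw].
    apply (ltA_iff Hz Hsw) in H1. apply (ltA_iff Hsw Hp) in H2. exact (Hno w sw Hsw (conj H1 H2)).
  - right. split; auto. split; auto. intros w Hw Hwu. destruct (pos_ex Hw) as [sw Hsw].
    apply (ltA_iff Hp Hsw). pose proof Hsw as [[Hs0 Hs1] Hvw].
    destruct (Rle_lt_or_eq_dec 0 sw Hs0) as [|Hsw0]. lra.
    exfalso. apply Hwu. subst. apply (pos_inj Hsw Hp).
Qed.

Lemma cls_leaf lf m t : leaf tV tE lf -> tE m lf -> posA alpha m t ->
  (exists m' t', posA alpha m' t' /\ t < t' /\ TmL_V tV tE m' /\
     (forall w s, posA alpha w s -> ~ (t < s < t')) /\ cls tV tE alpha lf (Some m'))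
  \/ (t = 1 /\ cls tV tE alpha lf None).
Proof.
  intros Hq Hmq Hp. pose proof (pos_spine Hp) as Hm.
  pose proof Hp as [[Ut0 Ut1] Hv].
  destruct (Rle_lt_or_eq_dec t 1 Ut1) as [Hlt|Heq].
  - left. destruct (succ_pos Hp Hlt) as [z [t' [Hz [Hzt [Hzs Hno]]]]].
    exists z, t'. split; auto. split; auto. split; auto. split; auto.
    left. exists m. split; [|right; auto].
    split; auto. split; auto. split. apply (ltA_iff Hp Hz); auto.
    intros [w [Hw [H1 H2]]]. destruct (pos_ex Hw) as [sw Hsw].
    apply (ltA_iff Hp Hsw) in H1. apply (ltA_iff Hsw Hz) in H2. exact (Hno w sw Hsw (conj H1 H2)).
  - right. split; auto. exists m. split; [|split; auto].
    split; auto. intros w Hw Hwm. destruct (pos_ex Hw) as [sw Hsw].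
    apply (ltA_iff Hsw Hp). pose proof Hsw as [[Hs0 Hs1] Hvw].
    destruct (Rle_lt_or_eq_dec sw 1 Hs1) as [|Hsw0]. lra.
    exfalso. apply Hwm. subst. apply (pos_inj Hsw Hp).
Qed.

End Cls.


Lemma spine_exists alpha : arc_param adj alpha AT -> exists s0, TmL_V tV tE s0.
Proof.
  intro Harc. assert (U0 : unit_interval 0) by (split; lra).
  destruct (closure_nonempty (arc_inA Harc U0)) as [p [[v [Hv _]]|[f [a [b [_ [[_ [Ha _]] _]]]]]]]; eauto.
  exists a. split; auto.
Qed.

Lemma leaf_nbr_spine lf m : arc_connected adj (closure adj (in_sub adj tV tE)) ->
  (exists s0, TmL_V tV tE s0) -> leaf tV tE lf -> tE lf m -> TmL_V tV tE m.
Proof.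
  intros Hac [s0 Hs0] Hl Hlm. split; auto. intro Hml.
  destruct Hl as [_ [x [Hlx Hlu]]]. destruct Hml as [_ [y [Hmy Hmu]]].
  assert (Hxm : m = x) by auto. subst x.
  assert (Hyl : lf = y) by auto. subst y.
  set (F := fun w => w = lf \/ w = m).
  assert (Hs0F : ~ F s0).
  { intros [->| ->]; apply Hs0; [split; auto; exists m; auto|split; auto; exists lf; auto]. }
  assert (AC : forall v, closure adj (in_sub adj tV tE) (Cpx (vfun v))).
  { intro v. apply closure_in_sub. left. exists v. split; auto. exists (vfun v). split; auto. apply vfun_ok. }
  assert (Hneq : Cpx (vfun m) <> Cpx (vfun s0)).
  { intro H. injection H; intro H'. pose proof (f_equal (fun k => k m) H') as H''. simpl in H''.
    pose proof (vfun_ok m) as [A1 _]. pose proof (vfun_ok s0) as [_ A2].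
    rewrite A1, A2 in H''. lra. intro; subst. apply Hs0F. right; auto. }
  destruct (Hac _ _ (AC m) (AC s0) Hneq) as [beta [B [Hb [Hb0 [Hb1 HB]]]]].
  set (Q := fun s => exists g, beta s = Cpx g /\ forall w, g w <> 0 -> F w).
  assert (Hall : forall s, 0 <= s <= 1 -> Q s).
  { apply RI; [lra| |].
    - exists (vfun m). split; auto. intros w Hw. right. apply (vf_supp (vfun_ok m) Hw).
    - intros tau Htau Hbel.
      assert (Utau : unit_interval tau) by (split; lra).
      assert (Qtau : Q tau).
      { destruct (Req_dec tau 0) as [->|Hne0].
        - exists (vfun m). split; auto. intros w Hw. right. apply (vf_supp (vfun_ok m) Hw).
        - assert (Hpos : 0 < tau) by lra.
          destruct (beta tau) as [ft|E] eqn:Hbt.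
          + exists ft. split; auto. intros w Hw. apply NNPP. intro HnF.
            assert (Habs : 0 < Rabs (ft w)) by (apply Rabs_pos_lt; auto).
            destruct (cont_cpx Hb Utau Hbt Habs) as [d [Hd Hd']].
            destruct (pick_left 0 tau Hpos Hd) as [s' [Hs' Hs'']].
            destruct (Hbel s' Hs') as [h [Hh HhF]].
            destruct (Hd' s' ltac:(split; lra) ltac:(rewrite Rabs_right; lra)) as [h' [Hh' [_ Hhw]]].
            rewrite Hh in Hh'. injection Hh'; intros; subst h'.
            assert (Hhw0 : h w = 0) by (apply NNPP; intro Hn; exact (HnF (HhF w Hn))).
            specialize (Hhw w). rewrite Hhw0, Rminus_0_l, Rabs_Ropp in Hhw. lra.
          + exfalso. destruct (cont_end Hb Utau Hbt [lf; m]) as [d [Hd Hd']].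
            destruct (pick_left 0 tau Hpos Hd) as [s' [Hs' Hs'']].
            destruct (Hbel s' Hs') as [h [Hh HhF]].
            pose proof (Hd' s' ltac:(split; lra) ltac:(rewrite Rabs_right; lra)) as Hc.
            rewrite Hh in Hc. destruct Hc as [w [Hw Hcw]].
            apply (inC_notin Hcw). destruct (HhF w Hw) as [->| ->]; simpl; auto. }
      destruct Qtau as [ft [Hbt HftF]].
      assert (Hvt : is_cpx adj ft) by exact (arc_cpx Hb Utau Hbt).
      assert (Ext : exists d, 0 < d /\ forall s', unit_interval s' -> Rabs (tau - s') < d -> Q s').
      { destruct Hvt as [[v Hv]|[a [b Hab]]].
        - assert (HvF : F v) by exact (HftF v (vf_one Hv)).
          assert (Hh2 : 0 < 1/2) by lra.
          destruct (cont_cpx Hb Utau Hbt Hh2) as [d [Hd Hd']].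
          exists d; split; auto. intros s' Us' Hs'. destruct (Hd' s' Us' Hs') as [h [Hh [Hhc Hhw]]].
          exists h; split; auto.
          assert (Hhv : h v <> 0).
          { specialize (Hhw v). destruct Hv as [Hv1 _]. rewrite Hv1 in Hhw. apply abs_lt_pos in Hhw. lra. }
          destruct Hhc as [[v' Hv']|[a [b Hab]]].
          + intros w Hw. rewrite (vf_supp Hv' Hw). rewrite <- (vf_supp Hv' Hhv). auto.
          + assert (HBp : closure adj (in_sub adj tV tE) (Cpx h)) by (apply HB; rewrite <- Hh; apply (arc_inA Hb Us')).
            assert (Hab2 : tE a b) by (destruct (closure_edge HBp Hab); auto).
            assert (Hvo : exists o, tE v o /\ forall w, h w <> 0 -> w = v \/ w = o).
            { destruct (inner_supp Hab Hhv) as [<-| <-].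
              - exists b. split; auto. intros w Hw. apply (inner_supp Hab Hw).
              - exists a. split; auto. intros w Hw. destruct (inner_supp Hab Hw); auto. }
            destruct Hvo as [o [Hvo Ho]].
            assert (HoF : F o).
            { destruct HvF as [-> | ->]. right. apply Hlu; auto. left. apply Hmu; auto. }
            intros w Hw. destruct (Ho w Hw) as [->| ->]; auto.
        - pose proof (inner_pos Hab) as [Pa Pb]. pose proof (adj_neq (proj1 Hab)) as Hab'.
          destruct (cont_cpx Hb Utau Hbt (eps := Rmin (ft a) (ft b)) ltac:(apply Rmin_glb_lt; lra)) as [d [Hd Hd']].
          exists d; split; auto. intros s' Us' Hs'. destruct (Hd' s' Us' Hs') as [h [Hh [Hhc Hhw]]].
          exists h; split; auto.
          assert (Ha : h a <> 0) by (pose proof (Hhw a) as HH; apply pos_of_near in HH; [lra|apply Rmin_l]).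
          assert (Hb' : h b <> 0) by (pose proof (Hhw b) as HH; apply pos_of_near in HH; [lra|apply Rmin_r]).
          intros w Hw. destruct (cpx_supp2 Hhc Ha Hb' Hab' Hw) as [->| ->]; apply HftF; lra. }
      destruct Ext as [d [Hd Hd']]. exists d; split; auto. intros s' Hs' Hs'1. apply Hd'. split; lra.
      rewrite Rabs_left1; lra. }
  destruct (Hall 1 ltac:(lra)) as [g [Hg HgF]]. rewrite Hb1 in Hg. injection Hg; intros; subst g.
  apply Hs0F, HgF. apply vf_one, vfun_ok.
Qed.


Lemma local_sep alpha A E t : arc_param adj alpha A -> is_end adj E -> unit_interval t -> alpha t <> Endp E ->
  exists S d, 0 < d /\ forall s, unit_interval s -> Rabs (t - s) < d ->
    forall z, vtx_at (alpha s) z -> ~ inC adj S E z.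
Proof.
  intros Harc HE Ut Hne. pose proof (arc_valid Harc Ut) as Hvt.
  destruct (alpha t) as [f|E'] eqn:Hat.
  - destruct Hvt as [[u Hu]|[a [b Hab]]].
    + assert (Hh2 : 0 < 1/2) by lra.
      destruct (cont_cpx Harc Ut Hat Hh2) as [d [Hd Hd']].
      exists [u], d. split; auto. intros s Us Hs z [g' [Hg' Hvg']] Hc.
      destruct (Hd' s Us Hs) as [g [Hg [_ Hgw]]]. rewrite Hg in Hg'. injection Hg'; intros; subst g'.
      assert (Hgu : g u <> 0).
      { specialize (Hgw u). destruct Hu as [Hu1 _]. rewrite Hu1 in Hgw. apply abs_lt_pos in Hgw. lra. }
      pose proof (vf_supp Hvg' Hgu) as ->. apply (inC_notin Hc). simpl; auto.
    + pose proof (inner_pos Hab) as [Pa Pb]. pose proof (adj_neq (proj1 Hab)) as Hab'.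
      destruct (cont_cpx Harc Ut Hat (eps := Rmin (f a) (f b)) ltac:(apply Rmin_glb_lt; lra)) as [d [Hd Hd']].
      exists [], d. split; auto. intros s Us Hs z [g' [Hg' Hvg']] Hc.
      destruct (Hd' s Us Hs) as [g [Hg [_ Hgw]]]. rewrite Hg in Hg'. injection Hg'; intros; subst g'.
      assert (Ha : g a <> 0) by (pose proof (Hgw a) as HH; apply pos_of_near in HH; [lra|apply Rmin_l]).
      assert (Hb : g b <> 0) by (pose proof (Hgw b) as HH; apply pos_of_near in HH; [lra|apply Rmin_r]).
      apply Hab'. rewrite (vf_supp Hvg' Ha), (vf_supp Hvg' Hb). auto.
  - assert (HS : exists S, forall z, ~ (inC adj S E z /\ inC adj S E' z)).
    { apply NNPP. intro Hn. apply Hne. f_equal. symmetry. apply end_sep; auto.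
      - intro S. apply NNPP. intro Hn2. apply Hn. exists S. intros z Hz. apply Hn2. exists z; tauto. }
    destruct HS as [S HS]. destruct (cont_end Harc Ut Hat S) as [d [Hd Hd']].
    exists S, d. split; auto. intros s Us Hs z [g [Hg Hvg]] Hc.
    pose proof (Hd' s Us Hs) as Hc'. rewrite Hg in Hc'. destruct Hc' as [w [Hw Hcw]].
    rewrite (vf_supp Hvg Hw) in Hcw. exact (HS z (conj Hc Hcw)).
Qed.

Lemma compact_sep alpha A E lo hi : arc_param adj alpha A -> is_end adj E -> 0 <= lo -> lo <= hi -> hi <= 1 ->
  (forall t, lo <= t <= hi -> alpha t <> Endp E) ->
  exists S, forall t, lo <= t <= hi -> forall z, vtx_at (alpha t) z -> ~ inC adj S E z.
Proof.
  intros Harc HE H0 Hlh H1 Hne.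
  set (P := fun x => exists S, forall t, lo <= t <= x -> forall z, vtx_at (alpha t) z -> ~ inC adj S E z).
  assert (Hall : forall x, lo <= x <= hi -> P x).
  { apply RI; auto.
    - destruct (local_sep Harc HE (t := lo) ltac:(split; lra) ltac:(apply Hne; lra)) as [S [d [Hd Hd']]].
      exists S. intros t Ht. apply Hd'. split; lra. replace (lo - t) with 0 by lra. rewrite Rabs_R0; auto.
    - intros tau Htau Hbel.
      destruct (local_sep Harc HE (t := tau) ltac:(split; lra) ltac:(apply Hne; lra)) as [S [d [Hd Hd']]].
      destruct (Req_dec tau lo) as [->|Hne1].
      + exists d. split; auto. intros x Hx Hxh. exists S. intros t Ht. apply Hd'. split; lra.
        apply abs_lt_intro; lra.
      + destruct (pick_left lo tau ltac:(lra) Hd) as [s' [Hs' Hs'']].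
        destruct (Hbel s' Hs') as [S' HS'].
        exists d. split; auto. intros x Hx Hxh. exists (S' ++ S). intros t Ht z Hz Hc.
        destruct (Rle_dec t s') as [Hts|Hts].
        * apply (HS' t ltac:(lra) z Hz). eapply inC_mono; [|exact Hc]. intros y Hy; apply in_or_app; auto.
        * apply (Hd' t ltac:(split; lra) ltac:(apply abs_lt_intro; lra) z Hz). eapply inC_mono; [|exact Hc].
          intros y Hy; apply in_or_app; auto. }
  exact (Hall hi ltac:(lra)).
Qed.

Lemma nbrs_list S : locally_finite adj -> exists L, forall v w, In v S -> adj v w -> In w L.
Proof.
  intro Hlf. induction S as [|x S IH].
  - exists []. intros v w [].
  - destruct IH as [L HL]. destruct (Hlf x) as [lx Hlx]. exists (lx ++ L).
    intros v w [->|Hv] Hvw; apply in_or_app; eauto.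
Qed.


Section MainSec.
Variable alpha : R -> point V.
Hypothesis Harc : arc_param adj alpha AT.
Hypothesis Hlf : locally_finite adj.
Hypothesis Hac : arc_connected adj (closure adj (in_sub adj tV tE)).
Variables (c : V) (pc : R) (kw : option V) (hi : R).
Hypothesis Hc : posA alpha c pc.
Hypothesis Hkw : (kw = None /\ hi = 2) \/ (exists d, kw = Some d /\ posA alpha d hi).

Definition inI z := exists kz, cls tV tE alpha z kz /\ key_le alpha (Some c) kz /\ key_le alpha kz kw.

Lemma I1 z s : posA alpha z s -> pc <= s -> s < hi -> inI z.
Proof.
  intros Hz H1 H2. exists (Some z). split. apply (cls_spine Harc (pos_spine Harc Hz) Hz).
  split.
  - destruct (Req_dec s pc) as [->|Hne]. left. f_equal. apply (pos_inj Hc Hz).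
    right. simpl. apply (ltA_iff Harc Hc Hz). lra.
  - destruct Hkw as [[-> _]|[d [-> Hd]]]. right; simpl; auto.
    right. simpl. apply (ltA_iff Harc Hz Hd). auto.
Qed.

Lemma I2 lf m s : leaf tV tE lf -> tE m lf -> posA alpha m s -> pc <= s -> s < hi -> inI lf.
Proof.
  intros Hl Hml Hm H1 H2.
  destruct (cls_leaf Harc Hl Hml Hm) as [[m' [t' [Hm' [Hst [Hsp [Hno Hcls]]]]]]|[Hs1 Hcls]].
  - exists (Some m'). split; auto. split.
    + right. simpl. apply (ltA_iff Harc Hc Hm'). lra.
    + destruct Hkw as [[-> _]|[d [-> Hd]]]. right; simpl; auto.
      destruct (Rlt_le_dec hi t') as [Hlt|Hle].
      * exfalso. exact (Hno d hi Hd (conj H2 Hlt)).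
      * destruct (Req_dec t' hi) as [->|Hne]. left. f_equal. apply (pos_inj Hm' Hd).
        right. simpl. apply (ltA_iff Harc Hm' Hd). lra.
  - exists None. split; auto. split. right; simpl; auto.
    destruct Hkw as [[-> _]|[d [-> Hd]]]. left; auto.
    exfalso. destruct Hd as [[_ Hd1] _]. lra.
Qed.

Lemma allI E S : (forall t, 0 <= t <= pc -> forall z, vtx_at (alpha t) z -> ~ inC adj S E z) ->
  (forall t, hi <= t <= 1 -> forall z, vtx_at (alpha t) z -> ~ inC adj S E z) ->
  forall L, (forall v w, In v S -> adj v w -> In w L) ->
  forall z, inC adj (S ++ L) E z -> inI z.
Proof.
  intros H1 H2 L HL z Hz.
  assert (HzS : inC adj S E z) by (eapply inC_mono; [|exact Hz]; intros y Hy; apply in_or_app; auto).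
  assert (Hpos : forall y sy, posA alpha y sy -> inC adj S E y -> pc < sy < hi).
  { intros y sy [[Hs0 Hs1] Hv] Hy. split.
    - destruct (Rle_dec sy pc); [|lra]. exfalso. exact (H1 sy ltac:(lra) y Hv Hy).
    - destruct (Rlt_le_dec sy hi); auto. exfalso. exact (H2 sy ltac:(lra) y Hv Hy). }
  destruct (classic (leaf tV tE z)) as [Hl|Hnl].
  - pose proof Hl as [_ [m [Hzm _]]].
    assert (Hm : TmL_V tV tE m) by exact (leaf_nbr_spine Hac (spine_exists Harc) Hl Hzm).
    assert (HmS : ~ In m S).
    { intro Hin. apply (inC_notin Hz). apply in_or_app. right. apply (HL m z Hin). apply HtEa, HtEs, Hzm. }
    assert (HmC : inC adj S E m).
    { apply (inC_back HzS). apply conn_reach. apply (reachS (b := z)).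
      exact HmS. apply HtEa, HtEs, Hzm. apply reach0. apply (inC_notin HzS). }
    destruct (pos_ex Harc Hm) as [sm Hsm].
    destruct (Hpos m sm Hsm HmC). apply (I2 Hl (HtEs Hzm) Hsm); lra.
  - destruct (pos_ex Harc (conj (HtV z) Hnl)) as [sz Hsz].
    destruct (Hpos z sz Hsz HzS). apply (I1 Hsz); lra.
Qed.

Section Conn.
Variables (u1 : V) (s0 : R).
Hypothesis Hu1 : posA alpha u1 s0.
Hypothesis Hs0 : pc <= s0.

Definition X z := reach inI u1 z.
Definition Xp (p : point V) : Prop :=
  match p with
  | Cpx g => exists z, g z <> 0 /\ X z
  | Endp E => forall S, exists z, X z /\ inC adj S E z
  end.

Lemma Xp_all E S : is_end adj E -> (forall z, inC adj S E z -> X z) ->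
  forall s, unit_interval s -> inChat adj S E (alpha s) -> Xp (alpha s).
Proof.
  intros HE HX s Us Hch. pose proof (arc_valid Harc Us) as Hv.
  destruct (alpha s) as [g|E'']; simpl in *.
  - destruct Hch as [w [Hw Hcw]]. exists w; auto.
  - destruct Hch as [r' [Er' [N HN]]]. intro S0.
    destruct (end_tail_inC Hv Er' S0) as [N0 HN0].
    exists (r' (Nat.max N N0)). split. apply HX, HN; lia. apply HN0; lia.
Qed.

Lemma main_conn u2 s1 : posA alpha u2 s1 -> s0 < s1 -> s1 < hi -> X u2.
Proof.
  intros Hu2 Hlt Hhi.
  pose proof Hu1 as [Us0 Hv1]. pose proof Hu2 as [Us1 Hv2].
  assert (Hall : forall s, s0 <= s <= s1 -> Xp (alpha s)).
  { apply RI; [lra| |].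
    - destruct Hv1 as [f [Hf Hvf]]. rewrite Hf. exists u1. split. apply (vf_one Hvf).
      apply reach0. apply (I1 Hu1); lra.
    - intros tau Htau Hbel.
      assert (Utau : unit_interval tau) by (destruct Us0, Us1; split; lra).
      pose proof (arc_valid Harc Utau) as Hvt.
      destruct (alpha tau) as [ft|E] eqn:Hat.
      + destruct Hvt as [[u Hu]|[a [b Hab]]].
        * assert (Hh2 : 0 < 1/2) by lra.
          destruct (cont_cpx Harc Utau Hat Hh2) as [d [Hd Hd']].
          assert (Near : forall s, unit_interval s -> Rabs (tau - s) < d -> exists g, alpha s = Cpx g /\ is_cpx adj g /\ g u <> 0).
          { intros s Us Hs. destruct (Hd' s Us Hs) as [g [Hg [Hgc Hgw]]]. exists g. split; auto. split; auto.
            specialize (Hgw u). destruct Hu as [Hu1' _]. rewrite Hu1' in Hgw. apply abs_lt_pos in Hgw. lra. }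
          assert (Xu : X u).
          { destruct (Req_dec tau s0) as [->|Hne].
            - assert (u = u1) by (apply (vtx_inj (p := alpha s0)); [rewrite Hat; exists ft; auto|auto]).
              subst. apply reach0. apply (I1 Hu1); lra.
            - destruct (pick_left s0 tau ltac:(lra) Hd) as [s' [Hs' Hs'']].
              assert (Us' : unit_interval s') by (destruct Us0, Utau; split; lra).
              destruct (Near s' Us' ltac:(rewrite Rabs_right; lra)) as [g [Hg [Hgc Hgu]]].
              pose proof (Hbel s' Hs') as Hx. rewrite Hg in Hx. destruct Hx as [z [Hgz Xz]].
              destruct (classic (z = u)) as [->|Hzu]; auto.
              pose proof (cpx_inner Hgc Hgz Hgu Hzu) as Hi.
              apply (reach_snoc Xz (proj1 Hi)). apply (I1 (s := tau)). split; auto. exists ft; auto. lra. lra. }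
          exists d. split; auto. intros s Hs Hs1. destruct (Near s ltac:(destruct Us0, Us1; split; lra) ltac:(apply abs_lt_intro; lra)) as [g [Hg [_ Hgu]]].
          rewrite Hg. exists u; auto.
        * pose proof (inner_pos Hab) as [Pa Pb]. pose proof (adj_neq (proj1 Hab)) as Hab'.
          assert (Hne : tau <> s0).
          { intros ->. destruct Hv1 as [f [Hf Hvf]]. rewrite Hf in Hat. injection Hat; intros; subst.
            exact (vf_not_inner Hvf Hab). }
          destruct (cont_cpx Harc Utau Hat (eps := Rmin (ft a) (ft b)) ltac:(apply Rmin_glb_lt; lra)) as [d [Hd Hd']].
          assert (Near : forall s, unit_interval s -> Rabs (tau - s) < d -> exists g, alpha s = Cpx g /\ is_cpx adj g /\ g a <> 0 /\ g b <> 0).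
          { intros s Us Hs. destruct (Hd' s Us Hs) as [g [Hg [Hgc Hgw]]]. exists g. split; auto. split; auto. split.
            pose proof (Hgw a) as HH; apply pos_of_near in HH; [lra|apply Rmin_l].
            pose proof (Hgw b) as HH; apply pos_of_near in HH; [lra|apply Rmin_r]. }
          destruct (pick_left s0 tau ltac:(lra) Hd) as [s' [Hs' Hs'']].
          assert (Us' : unit_interval s') by (destruct Us0, Utau; split; lra).
          destruct (Near s' Us' ltac:(rewrite Rabs_right; lra)) as [g [Hg [Hgc [Hga Hgb]]]].
          pose proof (Hbel s' Hs') as Hx. rewrite Hg in Hx. destruct Hx as [z [Hgz Xz]].
          exists d. split; auto. intros s Hs Hs1.
          destruct (Near s ltac:(destruct Us0, Us1; split; lra) ltac:(apply abs_lt_intro; lra)) as [h [Hh [_ [Hha Hhb]]]].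
          rewrite Hh. exists z. split; auto. destruct (cpx_supp2 Hgc Hga Hgb Hab' Hgz) as [->| ->]; auto.
      +
        assert (HE : is_end adj E) by exact Hvt.
        assert (Hne0 : tau <> s0).
        { intros ->. destruct Hv1 as [f [Hf _]]. congruence. }
        assert (Hne1 : tau <> s1).
        { intros ->. destruct Hv2 as [f [Hf _]]. congruence. }
        assert (NotE : forall t, unit_interval t -> t <> tau -> alpha t <> Endp E).
        { intros t Ut Htt Heq. apply Htt. apply (arc_inj Harc Ut Utau). congruence. }
        pose proof Hc as [[Hpc0 Hpc1] _].
        destruct (compact_sep Harc HE (lo := 0) (hi := pc) ltac:(lra) ltac:(lra) ltac:(lra)
                   (fun t Ht => NotE t ltac:(split; lra) ltac:(lra))) as [S1 HS1].
        assert (HS2 : exists S2, forall t, hi <= t <= 1 -> forall z, vtx_at (alpha t) z -> ~ inC adj S2 E z).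
        { destruct (Rle_dec hi 1) as [Hh1|Hh1].
          - apply (compact_sep Harc HE (lo := hi) (hi := 1)); try lra.
            intros t Ht. apply NotE. split; lra. lra.
          - exists []. intros t Ht. lra. }
        destruct HS2 as [S2 HS2].
        destruct (nbrs_list (S1 ++ S2) Hlf) as [L HL].
        set (S' := (S1 ++ S2) ++ L).
        assert (HI : forall z, inC adj S' E z -> inI z).
        { apply (allI (S := S1 ++ S2)); auto.
          - intros t Ht z Hz Hcz. apply (HS1 t Ht z Hz). eapply inC_mono; [|exact Hcz].
            intros y Hy; apply in_or_app; auto.
          - intros t Ht z Hz Hcz. apply (HS2 t Ht z Hz). eapply inC_mono; [|exact Hcz].
            intros y Hy; apply in_or_app; auto. }
        destruct (cont_end Harc Utau Hat S') as [d [Hd Hd']].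
        assert (Hw : exists w, X w /\ inC adj S' E w).
        { destruct (pick_left s0 tau ltac:(lra) Hd) as [s' [Hs' Hs'']].
          assert (Us' : unit_interval s') by (destruct Us0, Utau; split; lra).
          pose proof (Hbel s' Hs') as Hx. pose proof (Hd' s' Us' ltac:(rewrite Rabs_right; lra)) as Hch.
          pose proof (arc_valid Harc Us') as Hvs.
          destruct (alpha s') as [g|E''].
          - destruct Hx as [z [Hgz Xz]]. destruct Hch as [w [Hgw Hcw]]. exists w. split; auto.
            destruct (classic (z = w)) as [->|Hzw]; auto.
            apply (reach_snoc Xz (proj1 (cpx_inner Hvs Hgz Hgw Hzw))). auto.
          - destruct (Hx S') as [z [Xz Hcz]]. destruct Hch as [r' [Er' [N HN]]].
            destruct (end_tail_inC Hvs Er' S') as [N0 HN0].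
            exists z. split; auto. apply (inC_back (b := r' (Nat.max N N0))). apply HN; lia.
            apply (inC_conn Hvs Hcz). apply HN0; lia. }
        destruct Hw as [w [Xw Hcw]].
        assert (HX : forall z, inC adj S' E z -> X z).
        { intros z Hz. apply (reach_trans Xw). apply (reach_all (P := fun y => ~ In y S')).
          apply conn_reach. apply (inC_conn HE Hcw Hz).
          intros y Hy. apply HI. apply (inC_back Hcw). apply conn_sym. apply conn_reach. exact Hy. }
        exists d. split; auto. intros s Hs Hs1.
        assert (Us : unit_interval s) by (destruct Us0, Us1; split; lra).
        apply (Xp_all HE HX Us). apply Hd'; auto. apply abs_lt_intro; lra. }
  pose proof (Hall s1 ltac:(lra)) as Hx. destruct Hv2 as [f [Hf Hvf]]. rewrite Hf in Hx.
  destruct Hx as [z [Hz Xz]]. rewrite <- (vf_supp Hvf Hz). exact Xz.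
Qed.

End Conn.

Lemma reduce x a : cls tV tE alpha x (Some a) -> inI x -> ltA alpha c a -> key_lt alpha (Some a) kw ->
  exists u su, posA alpha u su /\ pc <= su /\ su < hi /\ reach inI x u.
Proof.
  intros Hcl HIx Hca Hakw.
  assert (Hahi : forall pa, posA alpha a pa -> pa < hi).
  { intros pa Hpa. destruct Hkw as [[-> ->]|[d [-> Hd]]].
    - destruct Hpa as [[_ H1] _]. lra.
    - apply (ltA_iff Harc Hpa Hd). exact Hakw. }
  destruct Hcl as [[a' [[Ha' [Ha [Hlt Hno]]] Hor]]|[[Ha Hmin] ->]].
  - destruct (pos_ex Harc Ha) as [pa Hpa]. destruct (pos_ex Harc Ha') as [pa' Hpa'].
    pose proof (proj1 (ltA_iff Harc Hpa' Hpa) Hlt) as Hlt'.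
    pose proof (proj1 (ltA_iff Harc Hc Hpa) Hca) as Hca'.
    pose proof (Hahi pa Hpa) as Hpah.
    assert (Hpc : pc <= pa').
    { destruct (Rle_dec pc pa') as [|Hn]; auto. exfalso. apply Hno. exists c. split.
      apply (pos_spine Harc Hc). split. apply (ltA_iff Harc Hpa' Hc); lra. exact Hca. }
    destruct Hor as [->|[Hl Htx]].
    + exists a, pa. split; auto. split; [lra|]. split; auto. apply reach0; auto.
    + exists a', pa'. split; auto. split; auto. split; [lra|].
      apply (reachS (b := a')). exact HIx. apply HtEa, HtEs, Htx. apply reach0. apply (I1 Hpa'); lra.
  - exfalso. destruct (pos_ex Harc Ha) as [pa Hpa].
    pose proof (proj1 (ltA_iff Harc Hc Hpa) Hca) as Hca'.
    destruct (classic (c = a)) as [->|Hne].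
    + pose proof (pos_uniq Harc Hc Hpa). lra.
    + pose proof (Hmin c (pos_spine Harc Hc) Hne) as H. apply (ltA_iff Harc Hpa Hc) in H. lra.
Qed.

Lemma final_reach x y kx ky : cls tV tE alpha x kx -> key_lt alpha (Some c) kx -> key_lt alpha kx kw ->
  cls tV tE alpha y ky -> key_lt alpha (Some c) ky -> key_lt alpha ky kw -> reach inI x y.
Proof.
  intros Hx Hcx Hxw Hy Hcy Hyw.
  destruct kx as [a|]; [|destruct Hxw]. destruct ky as [b|]; [|destruct Hyw].
  assert (HIx : inI x) by (exists (Some a); split; auto; split; right; auto).
  assert (HIy : inI y) by (exists (Some b); split; auto; split; right; auto).
  destruct (reduce Hx HIx Hcx Hxw) as [ux [sx [Hux [Hsx1 [Hsx2 Rx]]]]].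
  destruct (reduce Hy HIy Hcy Hyw) as [uy [sy [Huy [Hsy1 [Hsy2 Ry]]]]].
  apply (reach_trans Rx). apply (fun H => reach_trans H (reach_sym Ry)).
  destruct (Rlt_le_dec sx sy) as [Hlt|Hle].
  - exact (main_conn Hux Hsx1 Huy Hlt Hsy2).
  - destruct (Req_dec sx sy) as [->|Hne].
    + rewrite (pos_inj Hux Huy). apply reach0. apply (reach_Pr Ry).
    + apply reach_sym. exact (main_conn Huy Hsy1 Hux ltac:(lra) Hsx2).
Qed.

End MainSec.

End G.

Theorem lemma3p6 (V : Type) (adj : V -> V -> Prop)
  (tV : V -> Prop) (tE : V -> V -> Prop) (alpha : R -> point V)
  (v w x y : V) (kv kw kx ky : option V) :
  simple_graph adj -> locally_finite adj -> graph_connected adj ->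
  spanning_top_caterpillar adj tV tE ->
  arc_param adj alpha (closure adj (in_sub adj (TmL_V tV tE) (TmL_E tV tE))) ->
  cls tV tE alpha v kv -> cls tV tE alpha w kw -> key_le alpha kv kw ->
  cls tV tE alpha x kx -> key_lt alpha kv kx -> key_lt alpha kx kw ->
  cls tV tE alpha y ky -> key_lt alpha kv ky -> key_lt alpha ky kw ->
  exists l : list V, walk adj x l /\ last l x = y /\
    forall z, In z (x :: l) ->
      exists kz, cls tV tE alpha z kz /\ key_le alpha kv kz /\ key_le alpha kz kw.
Proof.
  intros Hsg Hlf Hgc Hspan Harc Hv Hw Hvw Hx Hvx Hxw Hy Hvy Hyw.
  destruct Hsg as [Hsym Hirr].
  destruct Hspan as [[[[HtEs [HtEa _]] _] [_ [Hac _]]] HtV].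
  change (arc_param adj alpha (AT adj tV tE)) in Harc.
  destruct kv as [c|]; [|destruct Hvx].
  assert (Hcs : TmL_V tV tE c) by (destruct Hv as [[v' [[_ [H _]] _]]|[[H _] _]]; exact H).
  destruct (pos_ex Harc Hcs) as [pc Hc].
  assert (Hkw : exists hi, (kw = None /\ hi = 2) \/ (exists d, kw = Some d /\ posA alpha d hi)).
  { destruct kw as [d|].
    - assert (Hds : TmL_V tV tE d) by (destruct Hw as [[v' [[_ [H _]] _]]|[[H _] _]]; exact H).
      destruct (pos_ex Harc Hds) as [hi Hd]. exists hi. right. exists d; auto.
    - exists 2. left; auto. }
  destruct Hkw as [hi Hkw].
  pose proof (final_reach Hsym Hirr HtV HtEs HtEa Harc Hlf Hac Hc Hkw Hx Hvx Hxw Hy Hvy Hyw) as HR.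
  destruct (reach_walk HR) as [l [H1 [H2 H3]]]. exists l. split; auto.
Qed.
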